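(* In the standing setting, suppose Assumption 1 holds with constant $\gamma_d>0$. Then for every $y\in\operatorname{int}Q$, $$[\nabla^2f(y)]^{-1}\preceq\frac{4}{\gamma_d^2}\,\big[f^*-\langle b,y\rangle\big]^2\,G^{-1}.$$
   Context: Standing setting: $\mathbb E,\mathbb H$ finite-dimensional real spaces with duals, pairing $\langle\cdot,\cdot\rangle$; $K\subset\mathbb E$ a regular cone with dual cone $K^*$; $F$ a $\nu$-normal barrier for $K$ and $F_*(s)=\max_{x\in\operatorname{int}K}\{-\langle s,x\rangle-F(x)\}$ its dual barrier. $A:\mathbb E\to\mathbb H^*$ linear, $c\in\mathbb E^*$, $b\in\mathbb H^*$; primal $\min\{\langle c,x\rangle:Ax=b,x\in K\}$, dual $\max\{\langle b,y\rangle:s+A^*y=c,s\in K^*\}$, both strictly feasible; $f^*$ is the optimal dual value. Central path: $(x_\mu,s_\mu,y_\mu)$ with $Ax_\mu=b$, $s_\mu+A^*y_\mu=c$, $s_\mu=-\mu\nabla F(x_\mu)$. $s(y)=c-A^*y$, $Q=\{y:s(y)\in K^*\}$, $f(y)=F_*(s(y))$ on $\operatorname{int}Q$. $B=\nabla^2F(x_1)$, $G=AB^{-1}A^*$, $\|y\|_G=\langle Gy,y\rangle^{1/2}$ for $y\in\mathbb H$. Assumption 1 (sharp dual maximum): there are an optimal dual pair $(s_*,y_* )$ and $\gamma_d>0$ such that $f^*-\langle b,y\rangle\ge\gamma_d\|y-y_*\|_G$ for all $y\in Q$. *)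

(* Defs.v *)
From Stdlib Require Import Reals.
From mathcomp Require Import ssreflect ssrfun ssrbool eqtype ssrnat fintype bigop.
Set Implicit Arguments. Unset Strict Implicit.
Open Scope R_scope.

(* Finite-dimensional real spaces are identified with R^n via a basis; the dual
   space with R^n via the dual basis, so the pairing <s,x> is the dot product. *)
Definition vec (n : nat) := 'I_n -> R.
Definition mat (m n : nat) := 'I_m -> 'I_n -> R.
Definition ten (n : nat) := 'I_n -> 'I_n -> 'I_n -> R.

Definition dot {n} (u v : vec n) : R := \big[Rplus/0]_(i < n) (u i * v i).
Definition vadd {n} (u v : vec n) : vec n := fun i => u i + v i.
Definition vsub {n} (u v : vec n) : vec n := fun i => u i - v i.
Definition vscale {n} (t : R) (u : vec n) : vec n := fun i => t * u i.
Definition vopp {n} (u : vec n) : vec n := fun i => - u i.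
Definition vzero {n} : vec n := fun _ => 0.
Definition vnorm {n} (u : vec n) : R := sqrt (dot u u).

Definition mulmv {m n} (A : mat m n) (x : vec n) : vec m :=
  fun i => \big[Rplus/0]_(j < n) (A i j * x j).
Definition trm {m n} (A : mat m n) : mat n m := fun j i => A i j.
Definition mulmm {m n p} (A : mat m n) (B : mat n p) : mat m p :=
  fun i k => \big[Rplus/0]_(j < n) (A i j * B j k).
Definition idm (n : nat) : mat n n := fun i j => if i == j then 1 else 0.
Arguments idm n : clear implicits.

Definition quad {n} (P : mat n n) (h : vec n) : R := dot (mulmv P h) h.
Definition cubic {n} (T : ten n) (h : vec n) : R :=
  \big[Rplus/0]_(i < n) \big[Rplus/0]_(j < n) \big[Rplus/0]_(k < n)
     (T i j k * h i * h j * h k).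

Definition loewner_le {n} (P Q : mat n n) : Prop :=
  forall u : vec n, quad P u <= quad Q u.

Definition vinterior {n} (S : vec n -> Prop) : vec n -> Prop :=
  fun x => exists eps, 0 < eps /\ forall z, vnorm (vsub z x) < eps -> S z.
Definition vclosed {n} (S : vec n -> Prop) : Prop :=
  forall x, (forall eps, 0 < eps -> exists z, S z /\ vnorm (vsub z x) < eps) -> S x.
Definition seq_conv {n} (xs : nat -> vec n) (x : vec n) : Prop :=
  forall eps, 0 < eps -> exists N, forall k, (N <= k)%nat -> vnorm (vsub (xs k) x) < eps.

Definition regular_cone {n} (K : vec n -> Prop) : Prop :=
  vclosed K /\
  (forall x t, K x -> 0 <= t -> K (vscale t x)) /\
  (forall x y, K x -> K y -> K (vadd x y)) /\
  (forall x, K x -> K (vopp x) -> forall i, x i = 0) /\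
  (exists x, vinterior K x).

Definition dual_cone {n} (K : vec n -> Prop) : vec n -> Prop :=
  fun s => forall x, K x -> 0 <= dot s x.

Definition is_grad {n} (f : vec n -> R) (x : vec n) (g : vec n) : Prop :=
  forall eps, 0 < eps -> exists delta, 0 < delta /\ forall h, vnorm h < delta ->
    Rabs (f (vadd x h) - f x - dot g h) <= eps * vnorm h.
Definition is_jac {n} (g : vec n -> vec n) (x : vec n) (J : mat n n) : Prop :=
  forall eps, 0 < eps -> exists delta, 0 < delta /\ forall h, vnorm h < delta ->
    forall i, Rabs (g (vadd x h) i - g x i - mulmv J h i) <= eps * vnorm h.
Definition is_dmat {n} (H : vec n -> mat n n) (x : vec n) (T : ten n) : Prop :=
  forall eps, 0 < eps -> exists delta, 0 < delta /\ forall h, vnorm h < delta ->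
    forall i j, Rabs (H (vadd x h) i j - H x i j
                      - \big[Rplus/0]_(k < n) (T i j k * h k)) <= eps * vnorm h.
Definition is_hessian {n} (f : vec n -> R) (y : vec n) (Hs : mat n n) : Prop :=
  exists (g : vec n -> vec n) (d : R), 0 < d /\
    (forall z, vnorm (vsub z y) < d -> is_grad f z (g z)) /\ is_jac g y Hs.

(* ---------- nu-normal barrier ----------
   F is a nu-normal barrier for K with gradient gF and Hessian HF on int K:
   F is C^3 on int K, convex, self-concordant, a barrier (blows up at the
   boundary), satisfies the nu-barrier inequality and is nu-logarithmically
   homogeneous. *)
Definition normal_barrier {n} (K : vec n -> Prop) (nu : R) (F : vec n -> R)
    (gF : vec n -> vec n) (HF : vec n -> mat n n) : Prop :=
  exists T : vec n -> ten n,
    (forall x, vinterior K x -> is_grad F x (gF x)) /\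
    (forall x, vinterior K x -> is_jac gF x (HF x)) /\
    (forall x, vinterior K x -> is_dmat HF x (T x)) /\
    (forall x, vinterior K x -> forall eps, 0 < eps -> exists delta, 0 < delta /\
        forall z, vnorm (vsub z x) < delta -> forall i j k,
          Rabs (T z i j k - T x i j k) <= eps) /\
    (forall x h, vinterior K x -> 0 <= quad (HF x) h) /\
    (forall x h, vinterior K x ->
        Rabs (cubic (T x) h) <= 2 * (quad (HF x) h * sqrt (quad (HF x) h))) /\
    (forall x h, vinterior K x -> (dot (gF x) h) ^ 2 <= nu * quad (HF x) h) /\
    (forall (xs : nat -> vec n) xb, (forall k, vinterior K (xs k)) ->
        seq_conv xs xb -> ~ vinterior K xb ->
        forall M, exists N, forall k, (N <= k)%nat -> M < F (xs k)) /\
    (forall x t, vinterior K x -> 0 < t -> F (vscale t x) = F x - nu * ln t).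

Definition is_dual_barrier {n} (K : vec n -> Prop) (F Fs : vec n -> R) : Prop :=
  forall s, vinterior (dual_cone K) s ->
    (exists x, vinterior K x /\ Fs s = - dot s x - F x) /\
    (forall x, vinterior K x -> - dot s x - F x <= Fs s).

(* Main.v *)
Require Import Defs.
From Stdlib Require Import Reals Lra FunctionalExtensionality Classical.
From mathcomp Require Import ssreflect ssrfun ssrbool eqtype ssrnat fintype bigop.
From mathcomp Require Import ssralg matrix Rstruct.
Set Implicit Arguments. Unset Strict Implicit.
Open Scope R_scope.

Lemma sumD n (F G : 'I_n -> R) : \big[Rplus/0]_(i<n) (F i + G i) = \big[Rplus/0]_(i<n) F i + \big[Rplus/0]_(i<n) G i.
Proof. by rewrite big_split. Qed.
Lemma sumMl n a (F : 'I_n -> R) : \big[Rplus/0]_(i<n) (a * F i) = a * \big[Rplus/0]_(i<n) F i.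
Proof. by rewrite big_distrr. Qed.
Lemma sumMr n a (F : 'I_n -> R) : \big[Rplus/0]_(i<n) (F i * a) = \big[Rplus/0]_(i<n) F i * a.
Proof. by rewrite big_distrl. Qed.
Lemma sum_ext n (F G : 'I_n -> R) : (forall i, F i = G i) -> \big[Rplus/0]_(i<n) F i = \big[Rplus/0]_(i<n) G i.
Proof. by move=> h; apply: eq_bigr => i _. Qed.
Lemma sum0 n (F : 'I_n -> R) : (forall i, F i = 0) -> \big[Rplus/0]_(i<n) F i = 0.
Proof. by move=> h; apply: big1 => i _. Qed.
Lemma sumN n (F : 'I_n -> R) : \big[Rplus/0]_(i<n) (- F i) = - \big[Rplus/0]_(i<n) F i.
Proof. elim/big_rec2: _ => [|i a b _ ->]; ring. Qed.
Lemma sumB n (F G : 'I_n -> R) : \big[Rplus/0]_(i<n) (F i - G i) = \big[Rplus/0]_(i<n) F i - \big[Rplus/0]_(i<n) G i.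
Proof. rewrite /Rminus sumD sumN //. Qed.
Lemma sum_le n (F G : 'I_n -> R) : (forall i, F i <= G i) -> \big[Rplus/0]_(i<n) F i <= \big[Rplus/0]_(i<n) G i.
Proof. move=> h; elim/big_rec2: _ => [|i a b _ hab]; [lra|]. have := h i; lra. Qed.
Lemma sum_ge0 n (F : 'I_n -> R) : (forall i, 0 <= F i) -> 0 <= \big[Rplus/0]_(i<n) F i.
Proof. move=> h; elim/big_rec: _ => [|i a _ hab]; [lra|]. have := h i; lra. Qed.
Lemma sum_abs n (F : 'I_n -> R) : Rabs (\big[Rplus/0]_(i<n) F i) <= \big[Rplus/0]_(i<n) Rabs (F i).
Proof. elim/big_rec2: _ => [|i a b _ hab]; first by rewrite Rabs_R0; lra.
  have := Rabs_triang (F i) b; lra. Qed.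
Lemma sum_swap n m (F : 'I_n -> 'I_m -> R) :
  \big[Rplus/0]_(i<n) \big[Rplus/0]_(j<m) F i j = \big[Rplus/0]_(j<m) \big[Rplus/0]_(i<n) F i j.
Proof. by rewrite exchange_big. Qed.
Lemma sum_eq0_ge0 n (F : 'I_n -> R) : (forall i, 0 <= F i) -> \big[Rplus/0]_(i<n) F i = 0 -> forall i, F i = 0.
Proof.
  move=> h hs i. have := h i. rewrite (bigD1 i) //= in hs.
  move: hs. set S := \big[_/_]_(j | _) _ => hs.
  have : 0 <= S.
  { rewrite /S; elim/big_rec: _ => [|k a _ ha]; [lra|]. have := h k; lra. }
  lra.
Qed.
Lemma sum_pick n (x : 'I_n -> R) i : \big[Rplus/0]_(j<n) ((if i == j then 1 else 0) * x j) = x i.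
Proof.
  rewrite (bigD1 i) //= eqxx big1; first ring.
  move=> j hj; case: eqP => e; last ring. by rewrite e eqxx in hj.
Qed.

Lemma dotC n (u v : vec n) : dot u v = dot v u.
Proof. apply: sum_ext => i; ring. Qed.
Lemma dotDl n (u v w : vec n) : dot (vadd u v) w = dot u w + dot v w.
Proof. rewrite /dot -sumD; apply: sum_ext => i; rewrite /vadd; ring. Qed.
Lemma dotDr n (u v w : vec n) : dot w (vadd u v) = dot w u + dot w v.
Proof. rewrite /dot -sumD; apply: sum_ext => i; rewrite /vadd; ring. Qed.
Lemma dotBl n (u v w : vec n) : dot (vsub u v) w = dot u w - dot v w.
Proof. rewrite /dot -sumB; apply: sum_ext => i; rewrite /vsub; ring. Qed.
Lemma dotBr n (u v w : vec n) : dot w (vsub u v) = dot w u - dot w v.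
Proof. rewrite /dot -sumB; apply: sum_ext => i; rewrite /vsub; ring. Qed.
Lemma dotZl n t (u w : vec n) : dot (vscale t u) w = t * dot u w.
Proof. rewrite /dot -sumMl; apply: sum_ext => i; rewrite /vscale; ring. Qed.
Lemma dotZr n t (u w : vec n) : dot w (vscale t u) = t * dot w u.
Proof. rewrite /dot -sumMl; apply: sum_ext => i; rewrite /vscale; ring. Qed.
Lemma dot0l n (w : vec n) : dot vzero w = 0.
Proof. apply: sum0 => i; rewrite /vzero; ring. Qed.
Lemma dot0r n (w : vec n) : dot w vzero = 0.
Proof. apply: sum0 => i; rewrite /vzero; ring. Qed.
Lemma dot_ge0 n (u : vec n) : 0 <= dot u u.
Proof. apply: sum_ge0 => i; nra. Qed.
Lemma dot_eq0 n (u : vec n) : dot u u = 0 -> forall i, u i = 0.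
Proof. move=> h i. have hh : forall j, 0 <= u j * u j by move=> j; nra.
  have := sum_eq0_ge0 hh h i. nra. Qed.

Lemma mulmvD m n (A : mat m n) u v : mulmv A (vadd u v) = vadd (mulmv A u) (mulmv A v).
Proof. apply: functional_extensionality => i; rewrite /mulmv /vadd -sumD; apply: sum_ext => j; ring. Qed.
Lemma mulmvB m n (A : mat m n) u v : mulmv A (vsub u v) = vsub (mulmv A u) (mulmv A v).
Proof. apply: functional_extensionality => i; rewrite /mulmv /vsub -sumB; apply: sum_ext => j; ring. Qed.
Lemma mulmvZ m n (A : mat m n) t u : mulmv A (vscale t u) = vscale t (mulmv A u).
Proof. apply: functional_extensionality => i; rewrite /mulmv /vscale -sumMl; apply: sum_ext => j; ring. Qed.
Lemma mulmv_mulmm m n p (A : mat m n) (B : mat n p) x : mulmv (mulmm A B) x = mulmv A (mulmv B x).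
Proof.
  apply: functional_extensionality => i; rewrite /mulmv /mulmm.
  rewrite (@sum_ext _ _ (fun k => \big[Rplus/0]_(j<n) (A i j * B j k * x k))); last by move=> k; rewrite sumMr.
  rewrite sum_swap; apply: sum_ext => j; rewrite -sumMl; apply: sum_ext => k; ring.
Qed.
Lemma mulmv_idm n (x : vec n) : mulmv (idm n) x = x.
Proof. apply: functional_extensionality => i; exact: sum_pick. Qed.
Lemma dot_trm m n (A : mat m n) v x : dot (mulmv (trm A) v) x = dot v (mulmv A x).
Proof.
  rewrite /dot /mulmv /trm.
  rewrite (@sum_ext _ _ (fun i => \big[Rplus/0]_(j<m) (A j i * v j * x i))); last by move=> k; rewrite sumMr.
  rewrite sum_swap; apply: sum_ext => j; rewrite -sumMl; apply: sum_ext => k; ring.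
Qed.
Lemma quad_ext n (P : mat n n) u : quad P u = dot (mulmv P u) u.
Proof. by []. Qed.
Lemma quadZ n (P : mat n n) t u : quad P (vscale t u) = t * t * quad P u.
Proof. rewrite /quad mulmvZ dotZl dotZr; ring. Qed.
Lemma quad_scaleM n (P : mat n n) k u : quad (fun i j => k * P i j) u = k * quad P u.
Proof. rewrite /quad /dot /mulmv -sumMl; apply: sum_ext => i.
  rewrite -Rmult_assoc -sumMl; congr (_ * _); apply: sum_ext => j; ring. Qed.

Lemma qdisc a b c : 0 <= c -> (forall t, 0 <= a + 2 * b * t + c * t * t) -> b * b <= a * c.
Proof.
  move=> hc h. destruct (Req_dec c 0) as [e|ne].
  - subst c. destruct (Req_dec b 0) as [eb|nb]; first (subst; lra).
    have := h (-(a+1)/(2*b)). have -> : a + 2 * b * (- (a + 1) / (2 * b)) + 0 * (- (a + 1) / (2 * b)) * (- (a + 1) / (2 * b)) = -1 by field.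
    lra.
  - have hc' : 0 < c by lra. have := h (-b/c).
    have -> : a + 2 * b * (- b / c) + c * (- b / c) * (- b / c) = (a*c - b*b)/c by field.
    move=> hh. have : 0 <= (a*c-b*b)/c * c by apply: Rmult_le_pos; lra.
    have -> : (a*c-b*b)/c * c = a*c-b*b by field. lra.
Qed.

Lemma dot_CS n (u v : vec n) : dot u v * dot u v <= dot u u * dot v v.
Proof.
  apply: qdisc; first exact: dot_ge0.
  move=> t. have := dot_ge0 (vadd u (vscale t v)).
  rewrite !dotDl !dotDr !dotZl !dotZr (dotC v u). lra.
Qed.

Lemma vnorm_ge0 n (u : vec n) : 0 <= vnorm u.
Proof. exact: sqrt_pos. Qed.
Lemma vnorm_sq n (u : vec n) : vnorm u * vnorm u = dot u u.
Proof. apply: sqrt_sqrt; exact: dot_ge0. Qed.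
Lemma vnormZ n t (u : vec n) : vnorm (vscale t u) = Rabs t * vnorm u.
Proof.
  rewrite /vnorm dotZl dotZr -Rmult_assoc sqrt_mult; [|nra|exact: dot_ge0].
  change (t*t) with (Rsqr t). by rewrite sqrt_Rsqr_abs.
Qed.
Lemma vnorm_triang n (u v : vec n) : vnorm (vadd u v) <= vnorm u + vnorm v.
Proof.
  have hu := vnorm_ge0 u. have hv := vnorm_ge0 v. have hw := vnorm_ge0 (vadd u v).
  have h1 := vnorm_sq u. have h2 := vnorm_sq v. have h3 := vnorm_sq (vadd u v).
  rewrite dotDl !dotDr (dotC v u) in h3.
  have hcs := dot_CS u v. rewrite -h1 -h2 in hcs.
  have hp : 0 <= vnorm u * vnorm v by nra.
  have : dot u v <= vnorm u * vnorm v.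
  { destruct (Rle_dec (dot u v) (vnorm u * vnorm v)) as [|hn]; first done.
    have hn' : vnorm u * vnorm v < dot u v by lra.
    have : (vnorm u * vnorm v) * (vnorm u * vnorm v) < dot u v * dot u v by nra.
    nra. }
  move=> hd.
  have : vnorm (vadd u v) * vnorm (vadd u v) <= (vnorm u + vnorm v) * (vnorm u + vnorm v) by nra.
  nra.
Qed.
Lemma vnorm_coord n (u : vec n) i : Rabs (u i) <= vnorm u.
Proof.
  have hu := vnorm_ge0 u. have h1 := vnorm_sq u.
  have : u i * u i <= dot u u.
  { rewrite /dot (bigD1 i) //=. set S := \big[_/_]_(j | _) _.
    have : 0 <= S by rewrite /S; elim/big_rec: _ => [|k a _ ha]; [lra|nra].
    lra. }
  move=> h. have : Rabs (u i) * Rabs (u i) <= vnorm u * vnorm u by rewrite -Rabs_mult Rabs_right; nra.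
  have := Rabs_pos (u i). nra.
Qed.
Definition l1 {n} (u : vec n) := \big[Rplus/0]_(i<n) Rabs (u i).
Lemma l1_ge0 n (u : vec n) : 0 <= l1 u.
Proof. apply: sum_ge0 => i; exact: Rabs_pos. Qed.
Lemma vnorm_l1 n (u : vec n) : vnorm u <= l1 u.
Proof.
  have hu := vnorm_ge0 u. have h1 := vnorm_sq u. have hl := l1_ge0 u.
  have : dot u u <= l1 u * l1 u /\ 0 <= l1 u.
  { rewrite /dot /l1. elim/big_rec2: _ => [|i a b _ [hab hb]]; first lra.
    have := Rabs_pos (u i). have : u i * u i = Rabs (u i) * Rabs (u i) by rewrite -Rabs_mult Rabs_right; nra.
    move=> e hp. split; nra. }
  move=> [h _]. nra.
Qed.
Lemma l1Z n t (u : vec n) : l1 (vscale t u) = Rabs t * l1 u.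
Proof. rewrite /l1 -sumMl; apply: sum_ext => i; by rewrite /vscale Rabs_mult. Qed.
Lemma dot_bound n (e w : vec n) E : (forall i, Rabs (e i) <= E) -> Rabs (dot e w) <= E * l1 w.
Proof.
  move=> h. rewrite /dot /l1 -sumMl. apply: Rle_trans (sum_abs _) _.
  apply: sum_le => i. rewrite Rabs_mult. apply: Rmult_le_compat_r; [exact: Rabs_pos|exact: h].
Qed.

Lemma dpl_ext (f g : R -> R) x l : (forall t, f t = g t) -> derivable_pt_lim f x l -> derivable_pt_lim g x l.
Proof. move=> h. have -> : g = f by apply: functional_extensionality => t; rewrite h. done. Qed.

Definition dir_form {n} (Phi : vec n -> R) (p z : vec n) (l : R) : Prop :=
  forall eps, 0 < eps -> exists delta, 0 < delta /\ forall d, Rabs d * vnorm z < delta ->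
    Rabs (Phi (vadd p (vscale d z)) - Phi p - d * l) <= eps * (Rabs d * vnorm z).

Lemma line_shift n (x0 z : vec n) t0 h :
  vadd x0 (vscale (t0 + h) z) = vadd (vadd x0 (vscale t0 z)) (vscale h z).
Proof. apply: functional_extensionality => i; rewrite /vadd /vscale; ring. Qed.

Lemma line_deriv n (Phi : vec n -> R) (x0 z : vec n) t0 l :
  dir_form Phi (vadd x0 (vscale t0 z)) z l ->
  derivable_pt_lim (fun t => Phi (vadd x0 (vscale t z))) t0 l.
Proof.
  move=> H eps heps.
  have hz := vnorm_ge0 z.
  have he' : 0 < eps / 2 / (vnorm z + 1) by apply: Rdiv_lt_0_compat; lra.
  case: (H _ he') => d [hd Hd].
  have hdel : 0 < d / (vnorm z + 1) by apply: Rdiv_lt_0_compat; lra.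
  exists (mkposreal _ hdel) => h hn0 hh. simpl in hh.
  rewrite line_shift.
  have hhpos : 0 < Rabs h by apply: Rabs_pos_lt.
  have k1 : Rabs h * vnorm z < d.
  { have : Rabs h * (vnorm z + 1) < d.
    { have := Rmult_lt_compat_r (vnorm z + 1) _ _ ltac:(lra) hh.
      have -> : d / (vnorm z + 1) * (vnorm z + 1) = d by field; lra. done. }
    nra. }
  have := Hd h k1. set E := Phi _ - Phi _ - h * l => hE.
  have -> : (Phi (vadd (vadd x0 (vscale t0 z)) (vscale h z)) - Phi (vadd x0 (vscale t0 z))) / h - l = E / h.
  { rewrite /E; field; done. }
  rewrite /Rdiv Rabs_mult Rabs_inv.
  apply: (Rle_lt_trans _ (eps / 2 / (vnorm z + 1) * vnorm z)).
  { have -> : eps/2/(vnorm z+1) * vnorm z = eps/2/(vnorm z+1) * (Rabs h * vnorm z) * / Rabs h by field; lra.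
    apply: Rmult_le_compat_r; [left; apply: Rinv_0_lt_compat; lra | exact: hE]. }
  have : eps / 2 / (vnorm z + 1) * vnorm z <= eps / 2.
  { have -> : eps / 2 / (vnorm z + 1) * vnorm z = eps / 2 * (vnorm z / (vnorm z + 1)) by field; lra.
    have : vnorm z / (vnorm z + 1) <= 1.
    { apply: (Rmult_le_reg_r (vnorm z + 1)); first lra.
      have -> : vnorm z / (vnorm z + 1) * (vnorm z + 1) = vnorm z by field; lra. lra. }
    nra. }
  lra.
Qed.

Lemma grad_dir n (F : vec n -> R) p g z : is_grad F p g -> dir_form F p z (dot g z).
Proof.
  move=> H eps he. case: (H eps he) => d [hd Hd]. exists d; split => // t ht.
  have hn : vnorm (vscale t z) < d by rewrite vnormZ.
  have := Hd _ hn. by rewrite vnormZ dotZr.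
Qed.

Lemma jac_dir n (g : vec n -> vec n) p J z w :
  is_jac g p J -> dir_form (fun q => dot (g q) w) p z (dot (mulmv J z) w).
Proof.
  move=> H eps he.
  have hw := l1_ge0 w.
  have he' : 0 < eps / (l1 w + 1) by apply: Rdiv_lt_0_compat; lra.
  case: (H _ he') => d [hd Hd]. exists d; split => // t ht.
  have hn : vnorm (vscale t z) < d by rewrite vnormZ.
  have := Hd _ hn. rewrite vnormZ => hb.
  have -> : dot (g (vadd p (vscale t z))) w - dot (g p) w - t * dot (mulmv J z) w
     = dot (vsub (vsub (g (vadd p (vscale t z))) (g p)) (mulmv J (vscale t z))) w.
  { by rewrite !dotBl mulmvZ dotZl. }
  apply: Rle_trans (dot_bound _ (E := eps / (l1 w + 1) * (Rabs t * vnorm z)) _) _.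
  { move=> i; rewrite /vsub; exact: hb. }
  have hp : 0 <= Rabs t * vnorm z by apply: Rmult_le_pos; [exact: Rabs_pos|exact: vnorm_ge0].
  have -> : eps / (l1 w + 1) * (Rabs t * vnorm z) * l1 w = eps * (Rabs t * vnorm z) * (l1 w / (l1 w + 1)) by field; lra.
  have : l1 w / (l1 w + 1) <= 1.
  { apply: (Rmult_le_reg_r (l1 w + 1)); first lra.
    have -> : l1 w / (l1 w + 1) * (l1 w + 1) = l1 w by field; lra. lra. }
  have : 0 <= eps * (Rabs t * vnorm z) by nra.
  nra.
Qed.

Lemma quad_lin n (A B C : mat n n) z :
  quad (fun i j => A i j - B i j - C i j) z = quad A z - quad B z - quad C z.
Proof.
  rewrite /quad /dot -!sumB; apply: sum_ext => i. rewrite /mulmv -!Rmult_minus_distr_r; congr (_ * _).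
  rewrite -!sumB; apply: sum_ext => j; ring.
Qed.

Lemma quad_cubic n (T : ten n) d z :
  quad (fun i j => \big[Rplus/0]_(k < n) (T i j k * (d * z k))) z = d * cubic T z.
Proof.
  rewrite /quad /dot /cubic /mulmv -sumMl; apply: sum_ext => i.
  rewrite -sumMr -sumMl; apply: sum_ext => j.
  rewrite -!sumMr -sumMl; apply: sum_ext => k. ring.
Qed.

Lemma quad_bound n (E : mat n n) z M : (forall i j, Rabs (E i j) <= M) -> Rabs (quad E z) <= M * l1 z * l1 z.
Proof.
  move=> h. rewrite /quad. apply: dot_bound => i. rewrite /mulmv.
  change (\big[Rplus/0]_(j < n) (E i j * z j)) with (dot (E i) z). apply: dot_bound => j; exact: h.
Qed.

Lemma dmat_dir n (H : vec n -> mat n n) p T z :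
  is_dmat H p T -> dir_form (fun q => quad (H q) z) p z (cubic T z).
Proof.
  move=> Hd eps he.
  have hw := l1_ge0 z.
  have he' : 0 < eps / (l1 z * l1 z + 1) by apply: Rdiv_lt_0_compat; nra.
  case: (Hd _ he') => d [hd Hd']. exists d; split => // t ht.
  have hn : vnorm (vscale t z) < d by rewrite vnormZ.
  have := Hd' _ hn. rewrite vnormZ => hb.
  rewrite -quad_cubic -quad_lin.
  apply: Rle_trans (quad_bound _ (M := eps / (l1 z * l1 z + 1) * (Rabs t * vnorm z)) _) _.
  { move=> i j. exact: hb. }
  have hp : 0 <= Rabs t * vnorm z by apply: Rmult_le_pos; [exact: Rabs_pos|exact: vnorm_ge0].
  have -> : eps / (l1 z * l1 z + 1) * (Rabs t * vnorm z) * l1 z * l1 z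
     = eps * (Rabs t * vnorm z) * (l1 z * l1 z / (l1 z * l1 z + 1)) by field; nra.
  have : l1 z * l1 z / (l1 z * l1 z + 1) <= 1.
  { apply: (Rmult_le_reg_r (l1 z * l1 z + 1)); first nra.
    have -> : l1 z * l1 z / (l1 z * l1 z + 1) * (l1 z * l1 z + 1) = l1 z * l1 z by field; nra. lra. }
  have : 0 <= eps * (Rabs t * vnorm z) by nra.
  nra.
Qed.

Lemma dpl_cont f x l : derivable_pt_lim f x l ->
  forall eps, 0 < eps -> exists d, 0 < d /\ forall t, Rabs (t - x) < d -> Rabs (f t - f x) < eps.
Proof.
  move=> H eps he. case: (H 1 Rlt_0_1) => d0 Hd0.
  have hl := Rabs_pos l.
  exists (Rmin d0 (eps / (Rabs l + 1))); split.
  { apply: Rmin_pos; [exact: cond_pos|apply: Rdiv_lt_0_compat; lra]. }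
  move=> t ht. destruct (Req_dec t x) as [e|ne].
  { subst. rewrite Rminus_diag Rabs_R0. lra. }
  have h1 : t - x <> 0 by lra.
  have h2 : Rabs (t - x) < d0 by apply: Rlt_le_trans ht (Rmin_l _ _).
  have h3 : Rabs (t - x) < eps / (Rabs l + 1) by apply: Rlt_le_trans ht (Rmin_r _ _).
  have := Hd0 _ h1 h2. have -> : x + (t - x) = t by ring. move=> hq.
  have hpos : 0 < Rabs (t - x) by apply: Rabs_pos_lt.
  have e1 : f t - f x = ((f t - f x) / (t - x) - l) * (t - x) + l * (t - x) by field.
  rewrite e1. apply: Rle_lt_trans (Rabs_triang _ _) _. rewrite !Rabs_mult.
  have : Rabs (t - x) * (Rabs l + 1) < eps.
  { have := Rmult_lt_compat_r (Rabs l + 1) _ _ ltac:(lra) h3.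
    have -> : eps / (Rabs l + 1) * (Rabs l + 1) = eps by field; lra. done. }
  nra.
Qed.

Lemma deriv_max f x l : derivable_pt_lim f x l ->
  (exists d, 0 < d /\ forall t, Rabs (t - x) < d -> f t <= f x) -> l = 0.
Proof.
  move=> H [d [hd Hd]].
  destruct (Rtotal_order l 0) as [hl|[hl|hl]]; last 1 first.
  - case: (H l hl) => d0 Hd0. have hd0 := cond_pos d0.
    have m1 := Rmin_l (d0/2) (d/2). have m2 := Rmin_r (d0/2) (d/2).
    have hp : 0 < Rmin (d0/2) (d/2) by apply: Rmin_pos; lra.
    set h := Rmin (d0/2) (d/2) in m1 m2 hp.
    have hh0 : h <> 0 by lra.
    have hah : Rabs h < d0 by rewrite Rabs_right; lra.
    have := Hd0 h hh0 hah.
    have hh' : Rabs (x + h - x) < d by rewrite Rabs_right; [lra|ring_simplify; lra].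
    have := Hd _ hh'. move=> hf hq.
    have : (f (x + h) - f x) / h <= 0.
    { rewrite /Rdiv; have := Rinv_0_lt_compat h hp. nra. }
    move=> hneg. have := Rabs_def2 _ _ hq. lra.
  - case: (H (-l) ltac:(lra)) => d0 Hd0. have hd0 := cond_pos d0.
    have m1 := Rmin_l (d0/2) (d/2). have m2 := Rmin_r (d0/2) (d/2).
    have hp : 0 < Rmin (d0/2) (d/2) by apply: Rmin_pos; lra.
    set k := Rmin (d0/2) (d/2) in m1 m2 hp.
    have hh0 : -k <> 0 by lra.
    have hah : Rabs (-k) < d0 by rewrite Rabs_Ropp Rabs_right; lra.
    have := Hd0 (-k) hh0 hah.
    have hh' : Rabs (x + - k - x) < d.
    { have -> : x + - k - x = - k by ring. rewrite Rabs_Ropp Rabs_right; lra. }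
    have := Hd _ hh'. move=> hf hq.
    have : 0 <= (f (x + - k) - f x) / (- k).
    { have -> : (f (x + - k) - f x) / (- k) = (f x - f (x + - k)) / k by field; lra.
      apply: Rmult_le_pos; first lra. left; apply: Rinv_0_lt_compat; lra. }
    move=> hneg. have := Rabs_def2 _ _ hq. lra.
  - done.
Qed.

Lemma mvt_nonincr f f' a b : a <= b -> (forall t, a <= t <= b -> derivable_pt_lim f t (f' t)) ->
  (forall t, a <= t <= b -> f' t <= 0) -> f b <= f a.
Proof.
  move=> hab hd hn. destruct (Req_dec a b) as [e|ne]; first (subst; lra).
  case: (MVT_cor2 f f' a b ltac:(lra) hd) => c [hc1 hc2].
  have := hn c ltac:(lra). nra.
Qed.

Lemma barrier_lemma f f' :
  (forall t, 0 <= t -> derivable_pt_lim f t (f' t)) -> f 0 <= 0 ->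
  (forall t, 0 <= t -> 0 < f t -> f' t <= 0) -> forall t, 0 <= t -> f t <= 0.
Proof.
  move=> hd h0 hn T hT. apply: Rnot_lt_le => hfT.
  set E := fun s => 0 <= s <= T /\ f s <= 0.
  have hb : bound E by exists T => s [[_ ?] _].
  have he : exists s, E s by exists 0; rewrite /E; lra.
  case: (completeness E hb he) => m [hub hlub].
  have hm0 : 0 <= m by apply: hub; rewrite /E; lra.
  have hmT : m <= T by apply: hlub => s [[_ ?] _].
  have hfm : f m <= 0.
  { apply: Rnot_lt_le => hpos.
    case: (dpl_cont (hd m hm0) hpos) => d [hd0 Hd].
    destruct (Req_dec m 0) as [e|ne]; first (rewrite e in hpos; lra).
    (* find s in E with m - d < s <= m *)
    have : ~ is_upper_bound E (m - Rmin (d/2) m).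
    { move=> hu. have := hlub _ hu. have : 0 < Rmin (d/2) m by apply: Rmin_pos; lra. lra. }
    move=> hnu. apply: hnu => s hs. apply: Rnot_lt_le => hlt.
    have hsm : s <= m by apply: hub.
    have : Rabs (s - m) < d.
    { rewrite Rabs_left1; last lra. have := Rmin_l (d/2) m. lra. }
    move=> hsd. have := Hd _ hsd. case: hs => _ hfs. move=> hh. have := Rabs_def2 _ _ hh. lra. }
  have hmT' : m < T by destruct (Req_dec m T) as [e|]; [subst; lra|lra].
  have hd' : forall t, m <= t <= T -> derivable_pt_lim f t (f' t) by move=> t ht; apply: hd; lra.
  case: (MVT_cor2 f f' m T hmT' hd') => c [hc1 hc2].
  have hfc : 0 < f c.
  { apply: Rnot_le_lt => hle. have : c <= m by apply: hub; rewrite /E; lra. lra. }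
  have := hn c ltac:(lra) hfc. nra.
Qed.

Lemma dpl_add (f g : R -> R) x a b : derivable_pt_lim f x a -> derivable_pt_lim g x b ->
  derivable_pt_lim (fun t => f t + g t) x (a + b).
Proof. move=> h1 h2. exact: (derivable_pt_lim_plus f g x a b h1 h2). Qed.
Lemma dpl_sub (f g : R -> R) x a b : derivable_pt_lim f x a -> derivable_pt_lim g x b ->
  derivable_pt_lim (fun t => f t - g t) x (a - b).
Proof. move=> h1 h2. exact: (derivable_pt_lim_minus f g x a b h1 h2). Qed.
Lemma dpl_lin c x : derivable_pt_lim (fun t => t * c) x c.
Proof.
  have := derivable_pt_lim_mult id (fct_cte c) x 1 0 (derivable_pt_lim_id x) (derivable_pt_lim_const c x).
  have -> : 1 * c + id x * 0 = c by ring. apply: dpl_ext => t. rewrite /mult_fct /fct_cte /id. done.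
Qed.
Lemma dpl_sq c x : derivable_pt_lim (fun t => t * t * c) x (2 * x * c).
Proof.
  have := derivable_pt_lim_mult id (fun t => t * c) x 1 c (derivable_pt_lim_id x) (dpl_lin c x).
  have -> : 1 * (x * c) + id x * c = 2 * x * c by rewrite /id; ring.
  apply: dpl_ext => t; rewrite /mult_fct /id; ring.
Qed.

Lemma vsub_add n (p h : vec n) : vsub (vadd p h) p = h.
Proof. apply: functional_extensionality => i; rewrite /vsub /vadd; ring. Qed.
Lemma vadd0s n (p v : vec n) : vadd p (vscale 0 v) = p.
Proof. apply: functional_extensionality => i; rewrite /vscale /vadd; ring. Qed.

Lemma int_open n (S : vec n -> Prop) x : vinterior S x ->
  exists r, 0 < r /\ forall q, vnorm (vsub q x) < r -> vinterior S q.
Proof.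
  move=> [e [he He]]. exists (e/2); split; first lra.
  move=> q hq. exists (e/2); split; first lra. move=> w hw. apply: He.
  have -> : vsub w x = vadd (vsub w q) (vsub q x).
  { apply: functional_extensionality => i; rewrite /vsub /vadd; ring. }
  have := vnorm_triang (vsub w q) (vsub q x). lra.
Qed.

Lemma grad_line n (phi : vec n -> R) g (x0 z : vec n) t0 :
  is_grad phi (vadd x0 (vscale t0 z)) g ->
  derivable_pt_lim (fun t => phi (vadd x0 (vscale t z))) t0 (dot g z).
Proof. move=> h. apply: line_deriv. exact: grad_dir. Qed.

Lemma second_diff n (phi : vec n -> R) g J p r v :
  0 < r -> (forall q, vnorm (vsub q p) < r -> is_grad phi q (g q)) -> is_jac g p J ->
  forall eps, 0 < eps -> exists delta, 0 < delta /\ forall t, 0 < t < delta ->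
   Rabs (phi (vadd p (vscale t v)) + phi (vadd p (vscale t (vopp v))) - 2 * phi p - t * t * quad J v)
     <= eps * (t * t).
Proof.
  move=> hr hg hJ eps he.
  have hv := vnorm_ge0 v. have hl := l1_ge0 v.
  set C := vnorm v * l1 v. have hC : 0 <= C by apply: Rmult_le_pos.
  have he' : 0 < eps / (2 * C + 1) by apply: Rdiv_lt_0_compat; lra.
  case: (hJ _ he') => dJ [hdJ HJ].
  have hm : 0 < Rmin dJ r by apply: Rmin_pos.
  exists (Rmin dJ r / (vnorm v + 1)); split; first by apply: Rdiv_lt_0_compat; lra.
  move=> t [ht0 ht].
  have htv : t * vnorm v < Rmin dJ r.
  { have : t * (vnorm v + 1) < Rmin dJ r.
    { have := Rmult_lt_compat_r (vnorm v + 1) _ _ ltac:(lra) ht.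
      have -> : Rmin dJ r / (vnorm v + 1) * (vnorm v + 1) = Rmin dJ r by field; lra. done. }
    nra. }
  have m1 := Rmin_l dJ r. have m2 := Rmin_r dJ r.
  have nrm : forall (tau : R) (w : vec n), 0 <= tau <= t -> vnorm w = vnorm v -> tau * vnorm w < Rmin dJ r.
  { move=> tau w ht1 ->. nra. }
  have hvo : vnorm (vopp v) = vnorm v.
  { have -> : vopp v = vscale (-1) v by apply: functional_extensionality => i; rewrite /vopp /vscale; ring.
    rewrite vnormZ Rabs_Ropp Rabs_R1; ring. }
  set psi := fun tau => phi (vadd p (vscale tau v)) + phi (vadd p (vscale tau (vopp v))) - tau * tau * quad J v.
  set psi' := fun tau => dot (g (vadd p (vscale tau v))) v + dot (g (vadd p (vscale tau (vopp v)))) (vopp v)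
                    - 2 * tau * quad J v.
  have hd : forall tau, 0 <= tau <= t -> derivable_pt_lim psi tau (psi' tau).
  { move=> tau htau. apply: dpl_sub; last exact: dpl_sq. apply: dpl_add; apply: grad_line; apply: hg;
    rewrite vsub_add vnormZ Rabs_right; try lra.
    - have := nrm tau v htau erefl. lra.
    - have := nrm tau (vopp v) htau hvo. lra. }
  have hb : forall tau, 0 <= tau <= t -> Rabs (psi' tau) <= 2 * (eps / (2 * C + 1)) * t * C.
  { move=> tau htau.
    have hgp : forall w, vnorm w = vnorm v ->
       forall i, Rabs (g (vadd p (vscale tau w)) i - g p i - mulmv J (vscale tau w) i) <= eps / (2 * C + 1) * (tau * vnorm v).
    { move=> w hw i. have hn : vnorm (vscale tau w) < dJ by rewrite vnormZ Rabs_right; [have := nrm tau w htau hw; lra|lra].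
      have := HJ _ hn i. rewrite vnormZ hw (Rabs_right tau); [done|lra]. }
    set ep := vsub (vsub (g (vadd p (vscale tau v))) (g p)) (mulmv J (vscale tau v)).
    set em := vsub (vsub (g (vadd p (vscale tau (vopp v)))) (g p)) (mulmv J (vscale tau (vopp v))).
    have e : psi' tau = dot ep v - dot em v.
    { rewrite /psi' /ep /em !dotBl !mulmvZ !dotZl.
      have -> : mulmv J (vopp v) = vopp (mulmv J v).
      { apply: functional_extensionality => i; rewrite /mulmv /vopp -sumN; apply: sum_ext => j; ring. }
      have ho : forall w : vec n, dot w (vopp v) = - dot w v.
      { move=> w. rewrite /dot -sumN; apply: sum_ext => j; rewrite /vopp; ring. }
      rewrite !ho. have -> : dot (vopp (mulmv J v)) v = - quad J v.
      { rewrite /quad /dot -sumN; apply: sum_ext => j; rewrite /vopp; ring. }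
      rewrite /quad. ring. }
    rewrite e.
    have b1 : Rabs (dot ep v) <= eps / (2 * C + 1) * (tau * vnorm v) * l1 v := dot_bound v (hgp v erefl).
    have b2 : Rabs (dot em v) <= eps / (2 * C + 1) * (tau * vnorm v) * l1 v := dot_bound v (hgp (vopp v) hvo).
    have hh : Rabs (dot ep v - dot em v) <= Rabs (dot ep v) + Rabs (dot em v).
    { rewrite /Rminus. apply: Rle_trans (Rabs_triang _ _) _. rewrite Rabs_Ropp. lra. }
    have : eps / (2 * C + 1) * (tau * vnorm v) * l1 v <= eps / (2 * C + 1) * t * C.
    { have hK : 0 <= eps / (2 * C + 1) * C by apply: Rmult_le_pos; lra.
      have -> : eps / (2 * C + 1) * (tau * vnorm v) * l1 v = tau * (eps / (2 * C + 1) * C) by rewrite /C; ring.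
      have -> : eps / (2 * C + 1) * t * C = t * (eps / (2 * C + 1) * C) by ring.
      apply: Rmult_le_compat_r; lra. }
    lra. }
  case: (MVT_cor2 psi psi' 0 t ht0 hd) => c [hc1 hc2].
  have hpsi0 : psi 0 = 2 * phi p by rewrite /psi !vadd0s; ring.
  have e2 : phi (vadd p (vscale t v)) + phi (vadd p (vscale t (vopp v))) - 2 * phi p - t * t * quad J v = psi t - psi 0.
  { rewrite hpsi0 /psi; ring. }
  have hct : 0 <= c <= t by lra.
  rewrite e2 hc1 Rabs_mult. have := hb c hct. rewrite Rminus_0_r (Rabs_right t); last lra.
  move=> hbc.
  have : 2 * (eps / (2 * C + 1)) * t * C * t <= eps * (t * t).
  { have -> : 2 * (eps / (2 * C + 1)) * t * C * t = eps * (t * t) * (2 * C / (2 * C + 1)) by field; lra.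
    have : 2 * C / (2 * C + 1) <= 1.
    { apply: (Rmult_le_reg_r (2 * C + 1)); first lra.
      have -> : 2 * C / (2 * C + 1) * (2 * C + 1) = 2 * C by field; lra. lra. }
    have : 0 <= eps * (t * t) by nra. nra. }
  have := Rabs_pos (psi' c). nra.
Qed.

Lemma Rabs_sub_le x y : Rabs (x - y) <= Rabs x + Rabs y.
Proof. rewrite /Rminus. apply: Rle_trans (Rabs_triang _ _) _. rewrite Rabs_Ropp. lra. Qed.

Lemma mixed_diff n (phi : vec n -> R) g J p r :
  0 < r -> (forall q, vnorm (vsub q p) < r -> is_grad phi q (g q)) -> is_jac g p J ->
  forall u v eps, 0 < eps -> exists delta, 0 < delta /\ forall t, 0 < t < delta ->
   Rabs (phi (vadd (vadd p (vscale t v)) (vscale t u)) - phi (vadd p (vscale t u))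
         - phi (vadd p (vscale t v)) + phi p - t * t * dot (mulmv J v) u) <= eps * (t * t).
Proof.
  move=> hr hg hJ u v eps he.
  have hu := vnorm_ge0 u. have hv := vnorm_ge0 v. have hl := l1_ge0 u.
  set C := (vnorm v + 2 * vnorm u) * l1 u. have hC : 0 <= C by apply: Rmult_le_pos; lra.
  have he' : 0 < eps / (C + 1) by apply: Rdiv_lt_0_compat; lra.
  case: (hJ _ he') => dJ [hdJ HJ].
  have hm : 0 < Rmin dJ r by apply: Rmin_pos.
  have m1 := Rmin_l dJ r. have m2 := Rmin_r dJ r.
  exists (Rmin dJ r / (vnorm u + vnorm v + 1)); split; first by apply: Rdiv_lt_0_compat; lra.
  move=> t [ht0 ht].
  have htv : t * (vnorm u + vnorm v) < Rmin dJ r.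
  { have : t * (vnorm u + vnorm v + 1) < Rmin dJ r.
    { have := Rmult_lt_compat_r (vnorm u + vnorm v + 1) _ _ ltac:(lra) ht.
      have -> : Rmin dJ r / (vnorm u + vnorm v + 1) * (vnorm u + vnorm v + 1) = Rmin dJ r by field; lra. done. }
    nra. }
  have htv2 : 0 <= t * vnorm v /\ 0 <= t * vnorm u by split; apply: Rmult_le_pos; lra.
  have htv3 : t * vnorm u + t * vnorm v < Rmin dJ r by lra.
  set q := vadd p (vscale t v).
  set a := dot (mulmv J v) u.
  set chi := fun s => phi (vadd q (vscale s u)) - phi (vadd p (vscale s u)) - s * (t * a).
  set chi' := fun s => dot (g (vadd q (vscale s u))) u - dot (g (vadd p (vscale s u))) u - t * a.
  have nh1 : forall s, 0 <= s <= t -> vnorm (vadd (vscale t v) (vscale s u)) <= t * vnorm v + s * vnorm u.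
  { move=> s hs. apply: Rle_trans (vnorm_triang _ _) _. rewrite !vnormZ !Rabs_right; lra. }
  have eq1 : forall s, vadd p (vadd (vscale t v) (vscale s u)) = vadd q (vscale s u).
  { move=> s; apply: functional_extensionality => i; rewrite /q /vadd /vscale; ring. }
  have hd : forall s, 0 <= s <= t -> derivable_pt_lim chi s (chi' s).
  { move=> s hs. have sut : s * vnorm u <= t * vnorm u by apply: Rmult_le_compat_r; lra.
    apply: dpl_sub; last exact: dpl_lin. apply: dpl_sub; apply: grad_line; apply: hg.
    - rewrite -eq1 vsub_add. have := nh1 s hs. lra.
    - rewrite vsub_add vnormZ Rabs_right; lra. }
  have hb : forall s, 0 <= s <= t -> Rabs (chi' s) <= eps / (C + 1) * t * C.
  { move=> s hs. have sut : s * vnorm u <= t * vnorm u by apply: Rmult_le_compat_r; lra.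
    set h1 := vadd (vscale t v) (vscale s u).
    set h2 := vscale s u.
    have n1 : vnorm h1 < dJ. { have := nh1 s hs. rewrite -/h1. lra. }
    have n2 : vnorm h2 < dJ by rewrite /h2 vnormZ Rabs_right; lra.
    set e1 := vsub (vsub (g (vadd p h1)) (g p)) (mulmv J h1).
    set e2 := vsub (vsub (g (vadd p h2)) (g p)) (mulmv J h2).
    have b1 : Rabs (dot e1 u) <= eps / (C + 1) * vnorm h1 * l1 u.
    { apply: dot_bound => i. exact: HJ. }
    have b2 : Rabs (dot e2 u) <= eps / (C + 1) * vnorm h2 * l1 u.
    { apply: dot_bound => i. exact: HJ. }
    have e : chi' s = dot e1 u - dot e2 u.
    { rewrite /chi' /e1 /e2 !dotBl /h1 eq1 mulmvD dotDl !mulmvZ !dotZl. rewrite /a /h2. ring. }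
    rewrite e.
    have hh : Rabs (dot e1 u - dot e2 u) <= Rabs (dot e1 u) + Rabs (dot e2 u).
    { rewrite /Rminus. apply: Rle_trans (Rabs_triang _ _) _. rewrite Rabs_Ropp. lra. }
    have := nh1 s hs. rewrite -/h1. move=> hn1.
    have hn2 : vnorm h2 = s * vnorm u by rewrite /h2 vnormZ Rabs_right; lra.
    have hK : 0 <= eps / (C + 1) by lra.
    have k1 : eps / (C + 1) * vnorm h1 * l1 u <= eps / (C + 1) * (t * vnorm v + t * vnorm u) * l1 u.
    { apply: Rmult_le_compat_r => //. apply: Rmult_le_compat_l => //; lra. }
    have k2 : eps / (C + 1) * vnorm h2 * l1 u <= eps / (C + 1) * (t * vnorm u) * l1 u.
    { rewrite hn2. apply: Rmult_le_compat_r => //. apply: Rmult_le_compat_l => //; lra. }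
    have -> : eps / (C + 1) * t * C = eps / (C + 1) * (t * vnorm v + t * vnorm u) * l1 u + eps / (C + 1) * (t * vnorm u) * l1 u by rewrite /C; ring.
    lra. }
  case: (MVT_cor2 chi chi' 0 t ht0 hd) => c [hc1 hc2].
  have e2 : phi (vadd (vadd p (vscale t v)) (vscale t u)) - phi (vadd p (vscale t u))
         - phi (vadd p (vscale t v)) + phi p - t * t * a = chi t - chi 0.
  { rewrite /chi !vadd0s /q. ring. }
  rewrite e2 hc1 Rabs_mult. have hct : 0 <= c <= t by lra.
  have := hb c hct. rewrite Rminus_0_r (Rabs_right t); last lra.
  move=> hbc.
  have : eps / (C + 1) * t * C * t <= eps * (t * t).
  { have -> : eps / (C + 1) * t * C * t = eps * (t * t) * (C / (C + 1)) by field; lra.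
    have : C / (C + 1) <= 1.
    { apply: (Rmult_le_reg_r (C + 1)); first lra.
      have -> : C / (C + 1) * (C + 1) = C by field; lra. lra. }
    have : 0 <= eps * (t * t) by nra. nra. }
  have := Rabs_pos (chi' c). nra.
Qed.

Lemma schwarz n (phi : vec n -> R) g J p r :
  0 < r -> (forall q, vnorm (vsub q p) < r -> is_grad phi q (g q)) -> is_jac g p J ->
  forall u v, dot (mulmv J u) v = dot (mulmv J v) u.
Proof.
  move=> hr hg hJ u v.
  set a := dot (mulmv J u) v. set b := dot (mulmv J v) u.
  have key : forall eps, 0 < eps -> Rabs (a - b) <= 2 * eps.
  { move=> eps he.
    case: (mixed_diff hr hg hJ u v he) => d1 [hd1 H1].
    case: (mixed_diff hr hg hJ v u he) => d2 [hd2 H2].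
    have hm : 0 < Rmin d1 d2 by apply: Rmin_pos.
    have m1 := Rmin_l d1 d2. have m2 := Rmin_r d1 d2.
    set t := Rmin d1 d2 / 2.
    have ht1 : 0 < t < d1 by rewrite /t; lra.
    have ht2 : 0 < t < d2 by rewrite /t; lra.
    have := H1 t ht1. have := H2 t ht2.
    have -> : vadd (vadd p (vscale t u)) (vscale t v) = vadd (vadd p (vscale t v)) (vscale t u).
    { apply: functional_extensionality => i; rewrite /vadd /vscale; ring. }
    rewrite -/a -/b.
    set D := phi (vadd (vadd p (vscale t v)) (vscale t u)).
    move=> h2 h1.
    have htt : 0 < t * t by nra.
    have : Rabs ((a - b) * (t * t)) <= 2 * eps * (t * t).
    { have -> : (a - b) * (t * t) = (D - phi (vadd p (vscale t u)) - phi (vadd p (vscale t v)) + phi p - t * t * b)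
          - (D - phi (vadd p (vscale t v)) - phi (vadd p (vscale t u)) + phi p - t * t * a) by ring.
      apply: Rle_trans (Rabs_sub_le _ _) _. lra. }
    rewrite Rabs_mult (Rabs_right (t*t)); last lra.
    move=> hh. apply: (Rmult_le_reg_r (t*t)) => //. }
  destruct (Req_dec a b) as [|ne]; first done.
  have hp : 0 < Rabs (a - b) by apply: Rabs_pos_lt; lra.
  have := key (Rabs (a - b) / 4) ltac:(lra). lra.
Qed.

Lemma vnorm_self n (u : vec n) : vnorm (vsub u u) = 0.
Proof.
  have -> : vsub u u = vscale 0 u by apply: functional_extensionality => i; rewrite /vsub /vscale; ring.
  rewrite vnormZ Rabs_R0; ring.
Qed.

Lemma int_in n (S : vec n -> Prop) u : vinterior S u -> S u.
Proof. move=> [e [he He]]. apply: He. rewrite vnorm_self. lra. Qed.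

Lemma int_ray n (K : vec n -> Prop) u z t : regular_cone K -> vinterior K u -> K z -> 0 <= t ->
  vinterior K (vadd u (vscale t z)).
Proof.
  move=> [_ [hsc [hadd _]]] [e [he He]] hz ht. exists e; split => // w hw.
  have -> : w = vadd (vsub w (vscale t z)) (vscale t z).
  { apply: functional_extensionality => i; rewrite /vsub /vadd /vscale; ring. }
  apply: hadd; last exact: hsc. apply: He.
  have -> : vsub (vsub w (vscale t z)) u = vsub w (vadd u (vscale t z)).
  { apply: functional_extensionality => i; rewrite /vsub /vadd /vscale; ring. }
  done.
Qed.

Lemma dpl_inv f x l : derivable_pt_lim f x l -> f x <> 0 ->
  derivable_pt_lim (fun t => / f t) x (- l / (f x * f x)).
Proof.
  move=> h hn. have := derivable_pt_lim_div (fct_cte 1) f x 0 l (derivable_pt_lim_const 1 x) h hn.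
  have -> : (0 * f x - l * fct_cte 1 x) / (f x)² = - l / (f x * f x) by rewrite /fct_cte /Rsqr; field.
  apply: dpl_ext => t. rewrite /div_fct /fct_cte /Rdiv Rmult_1_l. done.
Qed.

Lemma grad_sign n (K : vec n -> Prop) nu (gF : vec n -> vec n) (HF : vec n -> mat n n) :
  regular_cone K ->
  (forall x, vinterior K x -> is_jac gF x (HF x)) ->
  (forall x h, vinterior K x -> 0 <= quad (HF x) h) ->
  (forall x h, vinterior K x -> (dot (gF x) h) ^ 2 <= nu * quad (HF x) h) ->
  forall u z, vinterior K u -> K z -> dot (gF u) z <= 0.
Proof.
  move=> hK hj hpsd hnu u z hu hz.
  set p1 := fun t => dot (gF (vadd u (vscale t z))) z.
  set p2 := fun t => quad (HF (vadd u (vscale t z))) z.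
  have hint : forall t, 0 <= t -> vinterior K (vadd u (vscale t z)) by move=> t ht; exact: int_ray.
  have hd : forall t, 0 <= t -> derivable_pt_lim p1 t (p2 t).
  { move=> t ht. apply: (line_deriv (Phi := fun q => dot (gF q) z)). apply: jac_dir. exact: hj (hint t ht). }
  have hp0 : p1 0 = dot (gF u) z by rewrite /p1 vadd0s.
  apply: Rnot_lt_le => ha. set a := dot (gF u) z in ha hp0.
  have hmono : forall t, 0 <= t -> a <= p1 t.
  { move=> t ht. rewrite -hp0.
    have := mvt_nonincr (f := fun s => - p1 s) (f' := fun s => - p2 s) ht.
    move=> H. have : - p1 t <= - p1 0.
    { apply: H.
      - move=> s hs. exact: (derivable_pt_lim_opp p1 s (p2 s) (hd s ltac:(lra))).
      - move=> s hs. have := hpsd _ z (hint s ltac:(lra)). rewrite /p2. lra. }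
    lra. }
  have hnupos : 0 < nu.
  { have := hnu u z hu. have := hpsd u z hu. rewrite -/a /=. move=> h1 h2.
    destruct (Rle_lt_dec nu 0) as [hn|hn]; last done.
    have : nu * quad (HF u) z <= 0 by nra. nra. }
  set rho := fun t => / p1 t + t * / nu.
  set rho' := fun t => - p2 t / (p1 t * p1 t) + / nu.
  set T := 2 * nu / a.
  have hT : 0 <= T by rewrite /T; apply: Rmult_le_pos; [lra|left; apply: Rinv_0_lt_compat; lra].
  have : rho T <= rho 0.
  { apply: (mvt_nonincr (f' := rho')) => //.
    - move=> s hs. have h1 := hmono s ltac:(lra). apply: dpl_add.
      + apply: dpl_inv; [exact: (hd s ltac:(lra))|lra].
      + exact: dpl_lin.
    - move=> s hs. have h1 := hmono s ltac:(lra). rewrite /rho'.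
      have hq := hnu _ z (hint s ltac:(lra)). rewrite -/(p1 s) -/(p2 s) /= Rmult_1_r in hq.
      have hp : 0 < p1 s * p1 s by nra.
      have : / nu <= p2 s / (p1 s * p1 s).
      { apply: (Rmult_le_reg_r (p1 s * p1 s)) => //.
        have -> : p2 s / (p1 s * p1 s) * (p1 s * p1 s) = p2 s by field; lra.
        apply: (Rmult_le_reg_l nu) => //.
        have -> : nu * (/ nu * (p1 s * p1 s)) = p1 s * p1 s by field; lra. lra. }
      have -> : - p2 s / (p1 s * p1 s) = - (p2 s / (p1 s * p1 s)) by field; lra.
      lra. }
  rewrite /rho hp0 Rmult_0_l Rplus_0_r.
  have hpT := hmono T hT.
  have -> : T * / nu = 2 / a by rewrite /T; field; lra.
  have : 0 < / p1 T by apply: Rinv_0_lt_compat; lra.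
  move=> h1 h2. have : 2 / a = 2 * / a by []. have : 0 < / a by apply: Rinv_0_lt_compat; lra.
  rewrite /Rdiv in h2. lra.
Qed.

Lemma dpl_shift_sq c x : derivable_pt_lim (fun t => (c + t) * (c + t)) x (2 * (c + x)).
Proof.
  have h1 : derivable_pt_lim (fun t => c + t) x 1.
  { have := dpl_add (f := fun _ => c) (g := id) (derivable_pt_lim_const c x) (derivable_pt_lim_id x).
    have -> : 0 + 1 = 1 by ring. apply: dpl_ext => t. by []. }
  have := derivable_pt_lim_mult _ _ x 1 1 h1 h1.
  have -> : 1 * (c + x) + (c + x) * 1 = 2 * (c + x) by ring.
  apply: dpl_ext => t. by rewrite /mult_fct.
Qed.

Lemma dual_norm n (K : vec n -> Prop) nu (gF : vec n -> vec n) (HF : vec n -> mat n n) (T : vec n -> ten n) :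
  regular_cone K ->
  (forall x, vinterior K x -> is_jac gF x (HF x)) ->
  (forall x, vinterior K x -> is_dmat HF x (T x)) ->
  (forall x h, vinterior K x -> 0 <= quad (HF x) h) ->
  (forall x h, vinterior K x -> Rabs (cubic (T x) h) <= 2 * (quad (HF x) h * sqrt (quad (HF x) h))) ->
  (forall x h, vinterior K x -> (dot (gF x) h) ^ 2 <= nu * quad (HF x) h) ->
  forall x z, vinterior K x -> K z -> quad (HF x) z <= dot (gF x) z * dot (gF x) z.
Proof.
  move=> hK hj hdm hpsd hsc hnu x z hx hz.
  have hint : forall t, 0 <= t -> vinterior K (vadd x (vscale t z)) by move=> t ht; exact: int_ray.
  set g := fun t => - dot (gF (vadd x (vscale t z))) z.
  set phi := fun t => quad (HF (vadd x (vscale t z))) z.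
  set phi' := fun t => cubic (T (vadd x (vscale t z))) z.
  have hg0 : forall t, 0 <= t -> 0 <= g t.
  { move=> t ht. rewrite /g. have := grad_sign hK hj hpsd hnu (hint t ht) hz. lra. }
  have hdg : forall t, 0 <= t -> derivable_pt_lim g t (- phi t).
  { move=> t ht. have := line_deriv (Phi := fun q => dot (gF q) z) (jac_dir z z (hj _ (hint t ht))).
    move=> h. exact: (derivable_pt_lim_opp _ t _ h). }
  have hdp : forall t, 0 <= t -> derivable_pt_lim phi t (phi' t).
  { move=> t ht. apply: (line_deriv (Phi := fun q => quad (HF q) z)). exact: dmat_dir (hdm _ (hint t ht)). }
  have hphi : forall t, 0 <= t -> 0 <= phi t by move=> t ht; exact: hpsd _ _ (hint t ht).
  have hcub : forall t, 0 <= t -> - 2 * (phi t * sqrt (phi t)) <= phi' t.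
  { move=> t ht. have := hsc _ z (hint t ht). rewrite -/(phi t) -/(phi' t). move=> hh.
    have := Rle_abs (- phi' t). rewrite Rabs_Ropp. lra. }
  have e0 : phi 0 = quad (HF x) z by rewrite /phi vadd0s.
  have eg0 : g 0 = - dot (gF x) z by rewrite /g vadd0s.
  suff : phi 0 <= g 0 * g 0 by rewrite e0 eg0; lra.
  have hp0 := hphi 0 (Rle_refl 0).
  destruct (Req_dec (phi 0) 0) as [e|ne]; first (rewrite e; nra).
  have hpp : 0 < phi 0 by lra.
  have hs0 : 0 < sqrt (phi 0) by apply: sqrt_lt_R0.
  have hss0 := sqrt_sqrt _ hp0.
  set c := / sqrt (phi 0).
  have hc : 0 < c by apply: Rinv_0_lt_compat.
  have hcc : sqrt (phi 0) * c = 1 by rewrite /c; field; lra.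
  set zeta := fun t => 1 - phi t * ((c + t) * (c + t)).
  set zeta' := fun t => - (phi' t * ((c + t) * (c + t)) + phi t * (2 * (c + t))).
  have hz0 : zeta 0 <= 0.
  { rewrite /zeta Rplus_0_r. have : phi 0 * (c * c) = (sqrt (phi 0) * c) * (sqrt (phi 0) * c) by rewrite -{1}hss0; ring.
    rewrite hcc. lra. }
  have hzd : forall t, 0 <= t -> derivable_pt_lim zeta t (zeta' t).
  { move=> t ht. have := derivable_pt_lim_mult _ _ t _ _ (hdp t ht) (dpl_shift_sq c t).
    move=> h. have h2 := dpl_sub (f := fun _ => 1) (derivable_pt_lim_const 1 t) h.
    rewrite /zeta /zeta'. have -> : - (phi' t * ((c + t) * (c + t)) + phi t * (2 * (c + t))) = 0 - (phi' t * ((c + t) * (c + t)) + phi t * (2 * (c + t))) by ring.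
    apply: dpl_ext h2 => s. by rewrite /mult_fct. }
  have hzn : forall t, 0 <= t -> 0 < zeta t -> zeta' t <= 0.
  { move=> t ht hzt. rewrite /zeta in hzt. rewrite /zeta'.
    have hpt := hphi t ht. have hst := sqrt_pos (phi t). have hsst := sqrt_sqrt _ hpt.
    set s := sqrt (phi t) in hst hsst.
    have hw : 0 < c + t by lra.
    have hsw : s * (c + t) < 1.
    { apply: Rnot_le_lt => hle. have : 1 <= (s * (c + t)) * (s * (c + t)) by nra.
      have -> : (s * (c + t)) * (s * (c + t)) = phi t * ((c + t) * (c + t)) by rewrite -hsst; ring. lra. }
    have hc3 := hcub t ht. rewrite -/s in hc3.
    have hA : - 2 * (phi t * s) * ((c + t) * (c + t)) <= phi' t * ((c + t) * (c + t)).
    { apply: Rmult_le_compat_r; nra. }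
    have hB : 0 <= phi t * (c + t) * (1 - s * (c + t)) by apply: Rmult_le_pos; nra.
    nra. }
  have hchi : forall t, 0 <= t -> 1 <= phi t * ((c + t) * (c + t)).
  { move=> t ht. have := barrier_lemma hzd hz0 hzn ht. rewrite /zeta. lra. }
  apply: Rnot_lt_le => hlt.
  have hg00 := hg0 0 (Rle_refl 0).
  have hg0c : g 0 < / c.
  { rewrite /c Rinv_inv. apply: Rnot_le_lt => hle. have : sqrt (phi 0) * sqrt (phi 0) <= g 0 * g 0 by nra. lra. }
  set Tt := / (/ c - g 0).
  have hT : 0 < Tt by apply: Rinv_0_lt_compat; lra.
  set D := fun t => g t - / (c + t).
  set D' := fun t => - phi t - (- 1 / ((c + t) * (c + t))).
  have : D Tt <= D 0.
  { apply: (mvt_nonincr (f' := D')); first lra.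
    - move=> t ht. apply: dpl_sub; first exact: (hdg t ltac:(lra)).
      apply: (dpl_inv (f := fun t => c + t)); last lra.
      have := dpl_add (f := fun _ => c) (g := id) (derivable_pt_lim_const c t) (derivable_pt_lim_id t).
      have -> : 0 + 1 = 1 by ring. apply: dpl_ext => s. by [].
    - move=> t ht. rewrite /D'. have := hchi t ltac:(lra). move=> h1.
      have hw : 0 < (c + t) * (c + t) by nra.
      have : 1 / ((c + t) * (c + t)) <= phi t.
      { apply: (Rmult_le_reg_r ((c + t) * (c + t))) => //.
        have -> : 1 / ((c + t) * (c + t)) * ((c + t) * (c + t)) = 1 by field; lra. lra. }
      have -> : - 1 / ((c + t) * (c + t)) = - (1 / ((c + t) * (c + t))) by field; lra.
      lra. }
  rewrite /D Rplus_0_r. have hgT := hg0 Tt ltac:(lra).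
  have hinvT : / Tt = / c - g 0 by rewrite /Tt Rinv_inv.
  have : / (c + Tt) < / Tt by apply: Rinv_lt_contravar; nra.
  lra.
Qed.

Lemma dpl_dot_line n (s x h : vec n) t0 :
  derivable_pt_lim (fun t => dot s (vadd x (vscale t h))) t0 (dot s h).
Proof.
  have := dpl_add (f := fun _ => dot s x) (derivable_pt_lim_const (dot s x) t0) (dpl_lin (dot s h) t0).
  have -> : 0 + dot s h = dot s h by ring.
  apply: dpl_ext => t. by rewrite dotDr dotZr Rmult_comm.
Qed.

Lemma first_order n (F : vec n -> R) x g s :
  is_grad F x g ->
  (exists d, 0 < d /\ forall q, vnorm (vsub q x) < d -> - dot s q - F q <= - dot s x - F x) ->
  forall h, dot g h = - dot s h.
Proof.
  move=> hg [d [hd Hd]] h.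
  have hgl : derivable_pt_lim (fun t => F (vadd x (vscale t h))) 0 (dot g h).
  { apply: grad_line. by rewrite vadd0s. }
  have := dpl_sub (dpl_add (f := fun t => - dot s (vadd x (vscale t h))) (g := fun _ => 0)
      (derivable_pt_lim_opp _ _ _ (dpl_dot_line s x h 0)) (derivable_pt_lim_const 0 0)) hgl.
  move=> H.
  have H' : derivable_pt_lim (fun t => - dot s (vadd x (vscale t h)) - F (vadd x (vscale t h))) 0
             (- dot s h + 0 - dot g h).
  { apply: dpl_ext H => t. rewrite /opp_fct. ring. }
  have := deriv_max H'.
  have hn := vnorm_ge0 h.
  have : exists d0, 0 < d0 /\ forall t, Rabs (t - 0) < d0 ->
      - dot s (vadd x (vscale t h)) - F (vadd x (vscale t h)) <= - dot s (vadd x (vscale 0 h)) - F (vadd x (vscale 0 h)).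
  { exists (d / (vnorm h + 1)); split; first by apply: Rdiv_lt_0_compat; lra.
    move=> t ht. rewrite vadd0s. apply: Hd. rewrite vsub_add vnormZ. rewrite Rminus_0_r in ht.
    have : Rabs t * (vnorm h + 1) < d.
    { have := Rmult_lt_compat_r (vnorm h + 1) _ _ ltac:(lra) ht.
      have -> : d / (vnorm h + 1) * (vnorm h + 1) = d by field; lra. done. }
    have := Rabs_pos t. nra. }
  move=> hex hmax. have := hmax hex. lra.
Qed.

Lemma dual_cone_add n (K : vec n -> Prop) u v : dual_cone K u -> dual_cone K v -> dual_cone K (vadd u v).
Proof. move=> hu hv x hx. rewrite dotDl. have := hu x hx. have := hv x hx. lra. Qed.
Lemma dual_cone_scale n (K : vec n -> Prop) t u : 0 <= t -> dual_cone K u -> dual_cone K (vscale t u).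
Proof. move=> ht hu x hx. rewrite dotZl. have := hu x hx. nra. Qed.

Lemma s_interior n m (K : vec n -> Prop) (A : mat m n) c y y0 :
  vinterior (fun z : vec m => dual_cone K (vsub c (mulmv (trm A) z))) y ->
  vinterior (dual_cone K) (vsub c (mulmv (trm A) y0)) ->
  vinterior (dual_cone K) (vsub c (mulmv (trm A) y)).
Proof.
  move=> [ey [hey Hy]] [e0 [he0 H0]].
  set d := vsub y y0.
  have hd := vnorm_ge0 d.
  set t := ey / (2 * (vnorm d + 1)).
  have ht : 0 < t by apply: Rdiv_lt_0_compat; lra.
  set y' := vadd y (vscale t d).
  have hy' : dual_cone K (vsub c (mulmv (trm A) y')).
  { apply: Hy. rewrite /y' vsub_add vnormZ Rabs_right; last lra.
    have : t * (vnorm d + 1) < ey.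
    { rewrite /t. have -> : ey / (2 * (vnorm d + 1)) * (vnorm d + 1) = ey / 2 by field; lra. lra. }
    nra. }
  exists (t * e0 / (1 + t)); split; first by apply: Rdiv_lt_0_compat; nra.
  move=> w hw.
  set Ly := vsub c (mulmv (trm A) y).
  set w0 := vadd (vsub c (mulmv (trm A) y0)) (vscale ((1 + t) / t) (vsub w Ly)).
  have hw0 : dual_cone K w0.
  { apply: H0. have -> : vsub w0 (vsub c (mulmv (trm A) y0)) = vscale ((1 + t) / t) (vsub w Ly).
    { apply: functional_extensionality => i; rewrite /w0 /vsub /vadd /vscale; ring. }
    rewrite vnormZ Rabs_right; last by left; apply: Rdiv_lt_0_compat; lra.
    have : (1 + t) / t * vnorm (vsub w Ly) < (1 + t) / t * (t * e0 / (1 + t)).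
    { apply: Rmult_lt_compat_l => //. apply: Rdiv_lt_0_compat; lra. }
    have -> : (1 + t) / t * (t * e0 / (1 + t)) = e0 by field; lra. done. }
  have -> : w = vadd (vscale (1 / (1 + t)) (vsub c (mulmv (trm A) y'))) (vscale (t / (1 + t)) w0).
  { have hM : mulmv (trm A) y' = vadd (mulmv (trm A) y) (vscale t (vsub (mulmv (trm A) y) (mulmv (trm A) y0))).
    { by rewrite /y' /d mulmvD mulmvZ mulmvB. }
    rewrite hM. apply: functional_extensionality => i; rewrite /w0 /Ly /vsub /vadd /vscale. field; lra. }
  apply: dual_cone_add; apply: dual_cone_scale => //.
  - left; apply: Rdiv_lt_0_compat; lra.
  - left; apply: Rdiv_lt_0_compat; lra.
Qed.

Lemma vscale_opp n t (w : vec n) : vscale t (vopp w) = vscale (- t) w.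
Proof. apply: functional_extensionality => i; rewrite /vscale /vopp; ring. Qed.
Lemma vnorm_opp n (w : vec n) : vnorm (vopp w) = vnorm w.
Proof.
  have -> : vopp w = vscale (-1) w by apply: functional_extensionality => i; rewrite /vopp /vscale; ring.
  rewrite vnormZ Rabs_Ropp Rabs_R1; ring.
Qed.

Lemma second_lb n m (K : vec n -> Prop) (A : mat m n) c F gF HF Fs x y Hf :
  (forall x, vinterior K x -> is_grad F x (gF x)) ->
  (forall x, vinterior K x -> is_jac gF x (HF x)) ->
  (forall s, vinterior (dual_cone K) s -> forall x, vinterior K x -> - dot s x - F x <= Fs s) ->
  vinterior K x ->
  vinterior (dual_cone K) (vsub c (mulmv (trm A) y)) ->
  Fs (vsub c (mulmv (trm A) y)) = - dot (vsub c (mulmv (trm A) y)) x - F x ->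
  is_hessian (fun z : vec m => Fs (vsub c (mulmv (trm A) z))) y Hf ->
  forall v w, 2 * dot (mulmv (trm A) v) w - quad (HF x) w <= quad Hf v.
Proof.
  move=> hgF hjF hmax hx hs hFx [gf [dd [hdd [hgf hjf]]]] v w.
  set s := vsub c (mulmv (trm A) y) in hs hFx.
  set a := mulmv (trm A) v.
  set f := fun z : vec m => Fs (vsub c (mulmv (trm A) z)).
  case: (int_open hx) => rx [hrx Hrx].
  case: (int_open hs) => rs [hrs Hrs].
  have hgx : forall q, vnorm (vsub q x) < rx -> is_grad F q (gF q) by move=> q hq; apply: hgF; exact: Hrx.
  apply: Rnot_lt_le => hlt.
  set Del := 2 * dot a w - quad (HF x) w - quad Hf v.
  have hDel : 0 < Del by rewrite /Del; lra.
  have he : 0 < Del / 4 by lra.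
  case: (second_diff v hdd hgf hjf he) => d1 [hd1 H1].
  case: (second_diff w hrx hgx (hjF _ hx) he) => d2 [hd2 H2].
  have ha := vnorm_ge0 a. have hw := vnorm_ge0 w.
  set t := Rmin (Rmin d1 d2) (Rmin (rs / (vnorm a + 1)) (rx / (vnorm w + 1))) / 2.
  have q1 : 0 < rs / (vnorm a + 1) by apply: Rdiv_lt_0_compat; lra.
  have q2 : 0 < rx / (vnorm w + 1) by apply: Rdiv_lt_0_compat; lra.
  have hmin : 0 < Rmin (Rmin d1 d2) (Rmin (rs / (vnorm a + 1)) (rx / (vnorm w + 1))).
  { apply: Rmin_pos; apply: Rmin_pos; lra. }
  have mA := Rmin_l (Rmin d1 d2) (Rmin (rs / (vnorm a + 1)) (rx / (vnorm w + 1))).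
  have mB := Rmin_r (Rmin d1 d2) (Rmin (rs / (vnorm a + 1)) (rx / (vnorm w + 1))).
  have m1 := Rmin_l d1 d2. have m2 := Rmin_r d1 d2.
  have m3 := Rmin_l (rs / (vnorm a + 1)) (rx / (vnorm w + 1)).
  have m4 := Rmin_r (rs / (vnorm a + 1)) (rx / (vnorm w + 1)).
  have ht0 : 0 < t by rewrite /t; lra.
  have ht1 : t < d1 by rewrite /t; lra.
  have ht2 : t < d2 by rewrite /t; lra.
  have hta : t * vnorm a < rs.
  { have : t * (vnorm a + 1) < rs.
    { have : t < rs / (vnorm a + 1) by rewrite /t; lra.
      move=> h. have := Rmult_lt_compat_r (vnorm a + 1) _ _ ltac:(lra) h.
      have -> : rs / (vnorm a + 1) * (vnorm a + 1) = rs by field; lra. done. }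
    nra. }
  have htw : t * vnorm w < rx.
  { have : t * (vnorm w + 1) < rx.
    { have : t < rx / (vnorm w + 1) by rewrite /t; lra.
      move=> h. have := Rmult_lt_compat_r (vnorm w + 1) _ _ ltac:(lra) h.
      have -> : rx / (vnorm w + 1) * (vnorm w + 1) = rx by field; lra. done. }
    nra. }
  have eLp : vsub c (mulmv (trm A) (vadd y (vscale t v))) = vsub s (vscale t a).
  { rewrite mulmvD mulmvZ /s /a. apply: functional_extensionality => i; rewrite /vsub /vadd /vscale; ring. }
  have eLm : vsub c (mulmv (trm A) (vadd y (vscale t (vopp v)))) = vadd s (vscale t a).
  { rewrite mulmvD vscale_opp mulmvZ /s /a. apply: functional_extensionality => i; rewrite /vsub /vadd /vscale; ring. }
  have iLp : vinterior (dual_cone K) (vsub s (vscale t a)).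
  { apply: Hrs. have -> : vsub (vsub s (vscale t a)) s = vscale (- t) a.
    { apply: functional_extensionality => i; rewrite /vsub /vscale; ring. }
    rewrite vnormZ Rabs_Ropp Rabs_right; lra. }
  have iLm : vinterior (dual_cone K) (vadd s (vscale t a)).
  { apply: Hrs. rewrite vsub_add vnormZ Rabs_right; lra. }
  have ixp : vinterior K (vadd x (vscale t w)).
  { apply: Hrx. rewrite vsub_add vnormZ Rabs_right; lra. }
  have ixm : vinterior K (vadd x (vscale t (vopp w))).
  { apply: Hrx. rewrite vsub_add vnormZ vnorm_opp Rabs_right; lra. }
  have Ip := hmax _ iLp _ ixp. have Im := hmax _ iLm _ ixm.
  have := H1 t (conj ht0 ht1). have := H2 t (conj ht0 ht2).
  rewrite /f eLp eLm -/s hFx.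
  move=> h2 h1.
  clearbody s.
  set Fp := F (vadd x (vscale t w)) in Ip h2.
  set Fm := F (vadd x (vscale t (vopp w))) in Im h2.
  set Gp := Fs (vsub s (vscale t a)) in Ip h1.
  set Gm := Fs (vadd s (vscale t a)) in Im h1.
  rewrite vscale_opp in Im. rewrite ?dotBl ?dotDl ?dotDr ?dotZl ?dotZr in Ip. rewrite ?dotBl ?dotDl ?dotDr ?dotZl ?dotZr in Im.
  have a1 := Rle_abs (Gp + Gm - 2 * (- dot s x - F x) - t * t * quad Hf v).
  have a2 := Rle_abs (Fp + Fm - 2 * F x - t * t * quad (HF x) w).
  have htt : 0 < t * t by nra.
  have hk : 0 < t * t * Del by nra.
  rewrite /Del in hk.
  have e1 : t * (t * dot a w) = t * t * dot a w by ring.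
  have e2 : t * (- t * dot a w) = - (t * t * dot a w) by ring.
  rewrite e1 in Ip. rewrite e2 in Im.
  have e3 : t * t * (2 * dot a w - quad (HF x) w - quad Hf v) = 2 * (t * t * dot a w) - t * t * quad (HF x) w - t * t * quad Hf v by ring.
  rewrite e3 in hk.
  have e4 : Del / 4 * (t * t) = (t * t * (2 * dot a w - quad (HF x) w - quad Hf v)) / 4 by rewrite /Del; field.
  rewrite e4 e3 in h1 h2.
  lra.
Qed.

Lemma dot_mulmv_l m n (A : mat m n) k v : dot (mulmv A k) v = dot (mulmv (trm A) v) k.
Proof. by rewrite dotC dot_trm. Qed.

Lemma G_dot m n (A : mat m n) Binv p q :
  dot (mulmv (mulmm A (mulmm Binv (trm A))) p) q = dot (mulmv (trm A) q) (mulmv Binv (mulmv (trm A) p)).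
Proof. by rewrite !mulmv_mulmm dot_mulmv_l. Qed.

Lemma right_inv n (H B : mat n n) h : mulmm H B = idm n -> mulmv H (mulmv B h) = h.
Proof. move=> e. by rewrite -mulmv_mulmm e mulmv_idm. Qed.

Lemma Binv_sym n (H B : mat n n) :
  (forall u v, dot (mulmv H u) v = dot (mulmv H v) u) -> mulmm H B = idm n ->
  forall a b, dot (mulmv B a) b = dot (mulmv B b) a.
Proof.
  move=> hs hi a b.
  rewrite -{1}(right_inv b hi) dotC hs (right_inv a hi) dotC //.
Qed.

Lemma G_sym m n (A : mat m n) (H B : mat n n) :
  (forall u v, dot (mulmv H u) v = dot (mulmv H v) u) -> mulmm H B = idm n ->
  forall p q, dot (mulmv (mulmm A (mulmm B (trm A))) p) q = dot (mulmv (mulmm A (mulmm B (trm A))) q) p.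
Proof.
  move=> hs hi p q. rewrite !G_dot dotC (Binv_sym hs hi) dotC //.
Qed.

Lemma G_psd m n (A : mat m n) (H B : mat n n) :
  (forall h, 0 <= quad H h) -> mulmm H B = idm n ->
  forall v, 0 <= quad (mulmm A (mulmm B (trm A))) v.
Proof.
  move=> hp hi v. rewrite /quad G_dot.
  rewrite -{1}(right_inv (mulmv (trm A) v) hi). exact: hp.
Qed.

Lemma form_CS n (M : mat n n) :
  (forall u v, dot (mulmv M u) v = dot (mulmv M v) u) -> (forall h, 0 <= quad M h) ->
  forall p q, dot (mulmv M p) q * dot (mulmv M p) q <= quad M p * quad M q.
Proof.
  move=> hs hp p q. apply: (@qdisc (quad M p) (dot (mulmv M p) q) (quad M q)); first exact: hp.
  move=> t. have := hp (vadd p (vscale t q)).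
  rewrite /quad mulmvD mulmvZ !dotDl !dotDr !dotZl !dotZr (hs q p). lra.
Qed.

Lemma form_mink n (M : mat n n) :
  (forall u v, dot (mulmv M u) v = dot (mulmv M v) u) -> (forall h, 0 <= quad M h) ->
  forall p q, sqrt (quad M (vsub p q)) <= sqrt (quad M p) + sqrt (quad M q).
Proof.
  move=> hs hp p q.
  have hcs := form_CS hs hp p q.
  have h1 := sqrt_pos (quad M p). have h2 := sqrt_pos (quad M q).
  have e1 := sqrt_sqrt _ (hp p). have e2 := sqrt_sqrt _ (hp q).
  have hb : - dot (mulmv M p) q <= sqrt (quad M p) * sqrt (quad M q).
  { apply: Rnot_lt_le => hl.
    have hS : 0 <= sqrt (quad M p) * sqrt (quad M q) by apply: Rmult_le_pos.
    have : (sqrt (quad M p) * sqrt (quad M q)) * (sqrt (quad M p) * sqrt (quad M q))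
           < dot (mulmv M p) q * dot (mulmv M p) q by nra.
    have -> : (sqrt (quad M p) * sqrt (quad M q)) * (sqrt (quad M p) * sqrt (quad M q)) = quad M p * quad M q
      by rewrite -[in RHS]e1 -[in RHS]e2; ring. lra. }
  have eq : quad M (vsub p q) = quad M p + quad M q - 2 * dot (mulmv M p) q.
  { rewrite /quad mulmvB !dotBl !dotBr (hs q p). ring. }
  rewrite -(sqrt_square (sqrt (quad M p) + sqrt (quad M q))); last lra.
  apply: sqrt_le_1_alt. rewrite eq. nra.
Qed.

Lemma G_pd m n (A : mat m n) (H B : mat n n) :
  (forall u v, dot (mulmv H u) v = dot (mulmv H v) u) -> (forall h, 0 <= quad H h) -> mulmm H B = idm n ->
  (forall v : vec m, exists x : vec n, mulmv A x = v) ->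
  forall v, quad (mulmm A (mulmm B (trm A))) v = 0 -> forall i, v i = 0.
Proof.
  move=> hs hp hi hA v hq.
  set a := mulmv (trm A) v. set k := mulmv B a.
  have hk : mulmv H k = a by exact: right_inv.
  have hq' : quad H k = 0.
  { rewrite /quad hk -hq /quad G_dot -/a -/k dotC //. }
  have hw : forall w, dot (mulmv H k) w = 0.
  { move=> w. have := form_CS hs hp k w. rewrite hq' Rmult_0_l. move=> h. nra. }
  have ha : forall i, a i = 0.
  { apply: dot_eq0. have := hw a. by rewrite hk. }
  case: (hA v) => x hx.
  apply: dot_eq0. rewrite -{2}hx dotC dot_mulmv_l -/a.
  rewrite /dot. apply: sum0 => i. rewrite ha; ring.
Qed.

Lemma inv_exists m (Hf : mat m m) :
  (forall v : vec m, quad Hf v = 0 -> forall i, v i = 0) ->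
  exists Hfinv : mat m m, mulmm Hf Hfinv = idm m.
Proof.
  move=> hpd.
  pose M : 'M[R]_m := (\matrix_(i, j) Hf i j)%R.
  have hdet : (\det M != 0)%R.
  { apply/negP => /det0P [v nv vM].
    pose w : vec m := fun i => v ord0 i.
    have hcol : forall j, \big[Rplus/0]_(i < m) (w i * Hf i j) = 0.
    { move=> j. have := congr1 (fun X : 'M[R]_(1, m) => X ord0 j) vM. rewrite !mxE => h. transitivity (0%R : R); last by []. rewrite -h.
      apply: eq_bigr => i _. by rewrite mxE. }
    have hq : quad Hf w = 0.
    { rewrite /quad /dot /mulmv.
      rewrite (@sum_ext _ _ (fun i => \big[Rplus/0]_(j < m) (w i * Hf i j * w j))); last first.
      { move=> i. rewrite -sumMr. apply: sum_ext => j. ring. }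
      rewrite sum_swap. apply: sum0 => j. rewrite sumMr hcol. ring. }
    have := hpd w hq. move=> h0. move/negP: nv; apply. apply/eqP/matrixP => i j.
    rewrite (ord1 i) mxE. exact: h0. }
  have hu : (M \in unitmx)%R by rewrite unitmxE GRing.unitfE.
  exists (fun i j => invmx M i j).
  apply: functional_extensionality => i; apply: functional_extensionality => k.
  have := congr1 (fun X : 'M[R]_m => X i k) (mulmxV hu). rewrite !mxE /mulmm /idm => h.
  transitivity (((i == k)%:R)%R : R); last by case: (i == k).
  rewrite -h. apply: eq_bigr => j _. by rewrite mxE.
Qed.

Unset Implicit Arguments.
Set Strict Implicit.

Lemma quad_zero n (P : mat n n) : quad P vzero = 0.
Proof. by rewrite /quad dot0r. Qed.

Theorem mainTheorem6
  (n m : nat) (K : vec n -> Prop) (nu : R)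
  (F : vec n -> R) (gF : vec n -> vec n) (HF : vec n -> mat n n)
  (Fs : vec n -> R)
  (A : mat m n) (c : vec n) (b : vec m)
  (hK : regular_cone K)
  (hF : normal_barrier K nu F gF HF)
  (hFs : is_dual_barrier K F Fs)
  (hA : forall v : vec m, exists x : vec n, mulmv A x = v)
  (hprim : exists x, vinterior K x /\ mulmv A x = b)
  (hdual : exists y : vec m, vinterior (dual_cone K) (vsub c (mulmv (trm A) y)))
  (fstar : R)
  (hfstar : (forall y : vec m, dual_cone K (vsub c (mulmv (trm A) y)) -> dot b y <= fstar) /\
            (forall v, (forall y : vec m, dual_cone K (vsub c (mulmv (trm A) y)) -> dot b y <= v) ->
                       fstar <= v))
  (x1 s1 : vec n) (y1 : vec m)
  (hx1 : vinterior K x1)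
  (hcp : mulmv A x1 = b /\ vadd s1 (mulmv (trm A) y1) = c /\ s1 = vscale (-1) (gF x1))
  (Binv : mat n n) (hBinv : mulmm (HF x1) Binv = idm n)
  (gd : R) (hgd : 0 < gd)
  (hsharp : exists ystar : vec m,
      dual_cone K (vsub c (mulmv (trm A) ystar)) /\ dot b ystar = fstar /\
      forall y : vec m, dual_cone K (vsub c (mulmv (trm A) y)) ->
        fstar - dot b y >=
        gd * sqrt (quad (mulmm A (mulmm Binv (trm A))) (vsub y ystar)))
  (y : vec m)
  (hy : vinterior (fun z : vec m => dual_cone K (vsub c (mulmv (trm A) z))) y)
  (Hf : mat m m)
  (hHf : is_hessian (fun z : vec m => Fs (vsub c (mulmv (trm A) z))) y Hf) :
  (exists Hfinv : mat m m, mulmm Hf Hfinv = idm m) /\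
  forall (Hfinv Ginv : mat m m),
    mulmm Hf Hfinv = idm m ->
    mulmm (mulmm A (mulmm Binv (trm A))) Ginv = idm m ->
    loewner_le Hfinv
      (fun i j => 4 / gd ^ 2 * (fstar - dot b y) ^ 2 * Ginv i j).
Proof.
  case: hF => T [hgF [hjF [hdm [_ [hpsd [hsc [hnu _]]]]]]].
  case: hdual => y0 hy0.
  have hs := s_interior hy hy0.
  set s := vsub c (mulmv (trm A) y) in hs.
  have hmax : forall s', vinterior (dual_cone K) s' -> forall x', vinterior K x' -> - dot s' x' - F x' <= Fs s'.
  { move=> s' hs'. exact: (proj2 (hFs s' hs')). }
  case: (proj1 (hFs s hs)) => x [hx hFx].
  have hlb := second_lb hgF hjF hmax hx hs hFx hHf.
  have hfo : forall h, dot (gF x) h = - dot s h.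
  { apply: first_order; first exact: hgF.
    case: (int_open hx) => rx [hrx Hrx]. exists rx; split => // q hq.
    rewrite -hFx. apply: hmax => //. exact: Hrx. }
  have hdn : forall z, K z -> quad (HF x) z <= dot s z * dot s z.
  { move=> z hz. have := dual_norm hK hjF hdm hpsd hsc hnu hx hz. rewrite hfo. lra. }
  have hsym : forall u v, dot (mulmv (HF x1) u) v = dot (mulmv (HF x1) v) u.
  { case: (int_open hx1) => r1 [hr1 Hr1].
    apply: (schwarz (phi := F) (g := gF) hr1) => [q hq|]; [apply: hgF; exact: (Hr1 q hq)|exact: (hjF _ hx1)]. }
  have hpsd1 : forall h, 0 <= quad (HF x1) h by move=> h; exact: hpsd.
  set G := mulmm A (mulmm Binv (trm A)).
  have Gsym : forall p q, dot (mulmv G p) q = dot (mulmv G q) p := G_sym A hsym hBinv.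
  have Gpsd : forall v, 0 <= quad G v := G_psd A hpsd1 hBinv.
  have Gpd : forall v, quad G v = 0 -> forall i, v i = 0 := fun v => G_pd hsym hpsd1 hBinv hA (v := v).
  set r := fstar - dot b y.
  case: hsharp => ystar [hys [hbys hsh]].
  set Q := fun z : vec m => dual_cone K (vsub c (mulmv (trm A) z)).
  have step : forall tau v, 0 <= tau -> Q (vadd y (vscale tau v)) -> Q (vadd y (vscale tau (vopp v))) ->
      gd * (2 * tau * sqrt (quad G v)) <= 2 * r.
  { move=> tau v ht hp hm.
    have h1 := hsh _ hp. have h2 := hsh _ hm.
    have hmk := form_mink Gsym Gpsd (vsub (vadd y (vscale tau v)) ystar) (vsub (vadd y (vscale tau (vopp v))) ystar).
    have ev : vsub (vsub (vadd y (vscale tau v)) ystar) (vsub (vadd y (vscale tau (vopp v))) ystar) = vscale (2 * tau) v.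
    { apply: functional_extensionality => i; rewrite /vsub /vadd /vscale /vopp; ring. }
    rewrite ev in hmk.
    rewrite quadZ in hmk.
    have e : sqrt (2 * tau * (2 * tau) * quad G v) = 2 * tau * sqrt (quad G v).
    { rewrite sqrt_mult; [|nra|exact: Gpsd]. rewrite sqrt_square //; lra. }
    rewrite e in hmk.
    have eb : dot b (vadd y (vscale tau v)) + dot b (vadd y (vscale tau (vopp v))) = 2 * dot b y.
    { rewrite !dotDr vscale_opp !dotZr. ring. }
    rewrite /r. rewrite -hbys in h1 h2 |- *.
    have := Rmult_le_compat_l gd _ _ (Rlt_le _ _ hgd) hmk. rewrite -/G in h1 h2. lra. }
  have hHpsd : forall v, 0 <= quad Hf v.
  { move=> v. have := hlb v vzero. rewrite dot0r quad_zero. lra. }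
  have main : forall v, gd * gd * quad G v <= 4 * (r * r) * quad Hf v.
  { move=> v.
    have hq0 := Gpsd v. have hh0 := hHpsd v.
    destruct (Req_dec (quad G v) 0) as [e0|ne0].
    { rewrite e0. nra. }
    have hqp : 0 < quad G v by lra.
    set N := sqrt (quad G v).
    have hN : 0 < N by apply: sqrt_lt_R0.
    have hNN : N * N = quad G v by apply: sqrt_sqrt.
    case: hy => ey [hey Hey].
    have hv := vnorm_ge0 v.
    set tau1 := ey / (2 * (vnorm v + 1)).
    have ht1 : 0 < tau1 by apply: Rdiv_lt_0_compat; lra.
    have ht1v : tau1 * vnorm v < ey.
    { have : tau1 * (vnorm v + 1) = ey / 2 by rewrite /tau1; field; lra. nra. }
    have hr : 0 < r.
    { have := step tau1 v (Rlt_le _ _ ht1).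
      have hq1 : Q (vadd y (vscale tau1 v)).
      { apply: Hey. rewrite vsub_add vnormZ Rabs_right; lra. }
      have hq2 : Q (vadd y (vscale tau1 (vopp v))).
      { apply: Hey. rewrite vsub_add vnormZ vnorm_opp Rabs_right; lra. }
      move=> H. have hh := H hq1 hq2. rewrite -/N in hh. have : 0 < gd * (2 * tau1 * N) by apply: Rmult_lt_0_compat => //; nra.
      lra. }
    set tau0 := 2 * r / (gd * N).
    have ht0 : 0 < tau0 by apply: Rdiv_lt_0_compat; nra.
    have hgt : gd * (2 * tau0 * N) = 4 * r by rewrite /tau0; field; lra.
    have core : forall u, quad G u = quad G v -> quad Hf u = quad Hf v -> ~ Q (vadd y (vscale tau0 u)) ->
        gd * gd * quad G v <= 4 * (r * r) * quad Hf v.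
    { move=> u hGu hHu hnq.
      have : exists z, K z /\ dot (vsub c (mulmv (trm A) (vadd y (vscale tau0 u)))) z < 0.
      { apply: NNPP => hn. apply: hnq => z hz. apply: Rnot_lt_le => hlt. apply: hn. by exists z. }
      case=> z [hz hneg].
      set a := mulmv (trm A) u.
      have eL : vsub c (mulmv (trm A) (vadd y (vscale tau0 u))) = vsub s (vscale tau0 a).
      { rewrite mulmvD mulmvZ /s /a. apply: functional_extensionality => i; rewrite /vsub /vadd /vscale; ring. }
      rewrite eL dotBl dotZl in hneg.
      have hd0 : 0 <= dot s z by apply: (int_in hs).
      set d := dot s z in hneg hd0. set e := dot a z in hneg.
      have he : 0 < e by nra.
      have hzq := hdn z hz. rewrite -/d in hzq.
      set lam := / (tau0 * tau0 * e).
      have hlam : lam * (tau0 * tau0 * e) = 1 by rewrite /lam; field; nra.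
      have := hlb u (vscale lam z). rewrite dotZr quadZ -/a -/e. move=> hl.
      have hd2 : d * d <= (tau0 * e) * (tau0 * e) by nra.
      have hlp : 0 <= lam * lam by nra.
      have : lam * lam * quad (HF x) z <= lam * lam * ((tau0 * e) * (tau0 * e)).
      { apply: Rmult_le_compat_l => //. lra. }
      have e1 : lam * lam * ((tau0 * e) * (tau0 * e)) = / (tau0 * tau0) .
      { rewrite /lam; field; nra. }
      have e2 : 2 * (lam * e) = 2 / (tau0 * tau0) by rewrite /lam; field; nra.
      rewrite e1. move=> h3.
      have hfin : / (tau0 * tau0) <= quad Hf u by rewrite /Rdiv in e2; lra.
      rewrite hHu in hfin.
      have e3 : 4 * (r * r) * / (tau0 * tau0) = gd * gd * quad G v.
      { rewrite -hNN /tau0. field; nra. }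
      rewrite -e3. apply: Rmult_le_compat_l; nra. }
    destruct (classic (Q (vadd y (vscale tau0 v)))) as [hq|hq]; last exact: core v erefl erefl hq.
    apply: (core (vopp v)).
    - have -> : vopp v = vscale (-1) v by apply: functional_extensionality => i; rewrite /vopp /vscale; ring.
      rewrite quadZ; ring.
    - have -> : vopp v = vscale (-1) v by apply: functional_extensionality => i; rewrite /vopp /vscale; ring.
      rewrite quadZ; ring.
    - move=> hq2. have hh := step tau0 v (Rlt_le _ _ ht0) hq hq2. rewrite -/N in hh. lra. }
  have Hfpd : forall v, quad Hf v = 0 -> forall i, v i = 0.
  { move=> v hv. apply: Gpd. have := main v. rewrite hv Rmult_0_r. have := Gpsd v.
    have : 0 < gd * gd by nra. move=> hg h1 h2.
    have : gd * gd * quad G v = 0 by nra. move=> h. case: (Rmult_integral _ _ h); lra. }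
  split; first exact: inv_exists.
  move=> Hfinv Ginv hHi hGi u.
  set p := mulmv Hfinv u. set q := mulmv Ginv u.
  have hp : mulmv Hf p = u by exact: right_inv.
  have hq : mulmv G q = u by exact: right_inv.
  set k := 4 / gd ^ 2 * (fstar - dot b y) ^ 2.
  rewrite quad_scaleM.
  have eX : quad Hfinv u = quad Hf p by rewrite /quad hp dotC.
  have eY : quad Ginv u = quad G q by rewrite /quad hq dotC.
  rewrite eX eY.
  set X := quad Hf p.
  have hX0 : 0 <= X := hHpsd p.
  have hY0 := Gpsd q.
  have hcs := form_CS Gsym Gpsd q p.
  have eXd : dot (mulmv G q) p = X by rewrite hq /X /quad hp dotC.
  rewrite eXd in hcs.
  have hm := main p. rewrite -/X in hm.
  have hk : k = 4 * (r * r) / (gd * gd) by rewrite /k /r; simpl; field; lra.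
  rewrite hk.
  destruct (Req_dec X 0) as [ex|nx].
  { rewrite ex. apply: Rmult_le_pos => //. apply: Rmult_le_pos; [nra|left; apply: Rinv_0_lt_compat; nra]. }
  have hXp : 0 < X by lra.
  have : gd * gd * (X * X) <= quad G q * (4 * (r * r) * X).
  { have : gd * gd * (X * X) <= gd * gd * (quad G p * quad G q) by apply: Rmult_le_compat_l; nra.
    have : quad G q * (gd * gd * quad G p) <= quad G q * (4 * (r * r) * X) by apply: Rmult_le_compat_l.
    nra. }
  move=> h.
  have h2 : gd * gd * X <= 4 * (r * r) * quad G q.
  { apply: (Rmult_le_reg_r X) => //. nra. }
  apply: (Rmult_le_reg_l (gd * gd)); first nra.
  have -> : gd * gd * (4 * (r * r) / (gd * gd) * quad G q) = 4 * (r * r) * quad G q by field; lra.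
  done.
Qed.
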